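(* Let $p_k(x,y)=\frac{1}{\pi}\frac{y}{(x-2\pi k)^2+y^2}$ for $k\in\mathbb{Z}$ and $h(x,y)=\frac{1}{2\pi}\frac{\sinh y}{\cosh y-\cos x}$, for $x\in\mathbb{R}$, $y>0$. For $y>0$ and $n\in\mathbb{Z}\setminus\{0\}$, \[ \int_{-\infty}^\infty h^{-1}(x,y)\,H\nabla p_0(x,y)\cdot\nabla p_n(x,y)\,dx+2\int_{-\infty}^\infty p_n(x,y)\,H\nabla p_0(x,y)\cdot\nabla h^{-1}(x,y)\,dx \] \[ =\frac{\pi n(3y^2-\pi^2n^2)}{(y^2+\pi^2n^2)^3}+\frac{y^2}{\pi n(y^2+\pi^2n^2)\sinh^2 y}. \]
   Context: $\nabla=(\partial_x,\partial_y)$; $H\nabla f=(-\partial_y f,\partial_x f)$ (i.e. $H=\begin{pmatrix}0&-1\\1&0\end{pmatrix}$); $h^{-1}=1/h$; the dot is the Euclidean inner product. *)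

(* Defs.v *)
From Stdlib Require Import Reals.
From Coquelicot Require Export Coquelicot.
Open Scope R_scope.

Definition pk (k : Z) (x y : R) : R :=
  / PI * (y / ((x - 2 * PI * IZR k) ^ 2 + y ^ 2)).

Definition h (x y : R) : R := / (2 * PI) * (sinh y / (cosh y - cos x)).

Definition hinv (x y : R) : R := / h x y.

Definition dx (f : R -> R -> R) (x y : R) : R := Derive (fun t => f t y) x.
Definition dy (f : R -> R -> R) (x y : R) : R := Derive (fun t => f x t) y.

(* (H grad f) . (grad g), with H grad f = (-d_y f, d_x f) *)
Definition Hgrad_dot (f g : R -> R -> R) (x y : R) : R :=
  (- dy f x y) * dx g x y + dx f x y * dy g x y.

Definition is_int_R (f : R -> R) (I : R) : Prop :=
  is_RInt_gen f (Rbar_locally m_infty) (Rbar_locally p_infty) I.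

(* Main.v *)
Require Import Defs.
From Stdlib Require Import Reals.
From Coquelicot Require Import Coquelicot.
From Stdlib Require Import Lra Psatz ZArith.
Open Scope R_scope.

Lemma int_char_intro (f : R -> R) (I : R) :
  (forall x, continuous f x) ->
  (forall eps, 0 < eps -> exists M, forall a b, a < - M -> M < b ->
      Rabs (RInt f a b - I) < eps) ->
  is_int_R f I.
Proof.
  intros Hc H.
  unfold is_int_R, is_RInt_gen, filterlimi, filter_le, filtermapi.
  intros P [eps HP].
  destruct (H eps (cond_pos eps)) as [M HM].
  apply Filter_prod with (fun a => a < - M) (fun b => M < b).
  - exists (- M); auto.
  - exists M; auto.
  - intros a b Ha Hb. exists (RInt f a b). split.
    + apply (RInt_correct (V:=R_CompleteNormedModule)), (ex_RInt_continuous (V:=R_CompleteNormedModule)). intros; apply Hc.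
    + apply HP. apply HM; auto.
Qed.

Lemma int_char_elim (f : R -> R) (I : R) :
  is_int_R f I ->
  forall eps, 0 < eps -> exists M, forall a b, a < - M -> M < b ->
      Rabs (RInt f a b - I) < eps.
Proof.
  intros H eps Heps.
  unfold is_int_R, is_RInt_gen, filterlimi, filter_le, filtermapi in H.
  destruct (H (ball I (mkposreal eps Heps))) as [Q R1 HQ HR HQR].
  { exists (mkposreal eps Heps). auto. }
  destruct HQ as [M1 HM1]. destruct HR as [M2 HM2].
  exists (Rmax (Rabs M1) (Rabs M2)). intros a b Ha Hb.
  destruct (HQR a b) as [v [Hv1 Hv2]].
  - apply HM1. pose proof (Rmax_l (Rabs M1) (Rabs M2)). pose proof (Rle_abs (-M1)).
    rewrite Rabs_Ropp in H1. lra.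
  - apply HM2. pose proof (Rmax_r (Rabs M1) (Rabs M2)). pose proof (Rle_abs M2). lra.
  - simpl in Hv1. rewrite (is_RInt_unique _ _ _ _ Hv1). exact Hv2.
Qed.

Lemma cont_of_derive (f : R -> R) : (forall x, ex_derive f x) -> forall x, continuous f x.
Proof. intros H x. exact (ex_derive_continuous (K:=R_AbsRing) (V:=R_NormedModule) f x (H x)). Qed.

Lemma RInt_abs_bound (f g : R -> R) (a b : R) :
  (forall x, continuous f x) -> (forall x, continuous g x) ->
  (forall x, Rabs (f x) <= g x) ->
  Rabs (RInt f a b) <= Rabs (RInt g a b).
Proof.
  intros Hf Hg Hfg.
  assert (Ef : forall a b, ex_RInt f a b) by (intros; apply (ex_RInt_continuous (V:=R_CompleteNormedModule)); intros; apply Hf).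
  assert (Eg : forall a b, ex_RInt g a b) by (intros; apply (ex_RInt_continuous (V:=R_CompleteNormedModule)); intros; apply Hg).
  assert (Ea : forall a b, ex_RInt (fun t => Rabs (f t)) a b).
  { intros. apply (ex_RInt_continuous (V:=R_CompleteNormedModule)); intros. apply continuous_comp; [apply Hf|].
    apply continuous_Rabs. }
  assert (K : forall a b, a <= b -> Rabs (RInt f a b) <= RInt g a b).
  { intros a0 b0 Hab. eapply Rle_trans. apply abs_RInt_le; auto.
    apply RInt_le; auto. }
  destruct (Rle_dec a b) as [Hab|Hab].
  - eapply Rle_trans. apply K; auto. apply Rle_abs.
  - rewrite <- (opp_RInt_swap f), <- (opp_RInt_swap g) by auto.
    unfold opp; simpl. rewrite !Rabs_Ropp.
    eapply Rle_trans. apply K; lra. apply Rle_abs.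
Qed.

Lemma int_unique f I J : is_int_R f I -> is_int_R f J -> I = J.
Proof.
  intros H1 H2. apply (is_RInt_gen_unique f) in H1. apply (is_RInt_gen_unique f) in H2.
  congruence.
Qed.

Lemma int_ext f g I : (forall x, f x = g x) -> is_int_R f I -> is_int_R g I.
Proof.
  intros H. apply is_RInt_gen_ext. apply filter_forall. intros; auto.
Qed.

Lemma int_plus f g I J : is_int_R f I -> is_int_R g J -> is_int_R (fun x => f x + g x) (I + J).
Proof. intros H1 H2. apply (is_RInt_gen_plus f g I J H1 H2). Qed.

Lemma int_scal k f I : is_int_R f I -> is_int_R (fun x => k * f x) (k * I).
Proof. intros H1. apply (is_RInt_gen_scal f k I H1). Qed.

Lemma int_opp f I : is_int_R f I -> is_int_R (fun x => - f x) (- I).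
Proof. intros H1. apply (is_RInt_gen_opp f I H1). Qed.

Lemma int_minus f g I J : is_int_R f I -> is_int_R g J -> is_int_R (fun x => f x - g x) (I - J).
Proof. intros H1 H2. apply (is_RInt_gen_minus f g I J H1 H2). Qed.

Lemma int_zero : is_int_R (fun _ => 0) 0.
Proof.
  apply int_char_intro. intros; apply continuous_const.
  intros eps He. exists 0. intros a b _ _. rewrite RInt_const. unfold scal; simpl; unfold mult; simpl.
  rewrite Rmult_0_r, Rminus_0_r, Rabs_R0. lra.
Qed.


Lemma fprod_inf (P : R * R -> Prop) :
  filter_prod (Rbar_locally m_infty) (Rbar_locally p_infty) P ->
  exists M, forall a b, a < - M -> M < b -> P (a, b).
Proof.
  intros [Q R1 HQ HR HQR].
  destruct HQ as [M1 HM1]. destruct HR as [M2 HM2].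
  exists (Rmax (Rabs M1) (Rabs M2)). intros a b Ha Hb.
  apply HQR.
  - apply HM1. pose proof (Rmax_l (Rabs M1) (Rabs M2)). pose proof (Rle_abs (-M1)).
    rewrite Rabs_Ropp in H0. lra.
  - apply HM2. pose proof (Rmax_r (Rabs M1) (Rabs M2)). pose proof (Rle_abs M2). lra.
Qed.

Lemma exRInt (f : R -> R) : (forall x, continuous f x) -> forall a b, ex_RInt f a b.
Proof. intros H a b. apply (ex_RInt_continuous (V:=R_CompleteNormedModule)). intros; apply H. Qed.

Lemma Rabs_sub_le a b : Rabs (a - b) <= Rabs a + Rabs b.
Proof. unfold Rminus. rewrite <- (Rabs_Ropp b). apply Rabs_triang. Qed.

Lemma diff_lt X Y J e : Rabs (X - J) < e -> Rabs (Y - J) < e -> Rabs (X - Y) < 2 * e.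
Proof.
  intros H1 H2. replace (X - Y) with ((X - J) - (Y - J)) by ring.
  eapply Rle_lt_trans. apply Rabs_sub_le. lra.
Qed.

Lemma int_dom (f g : R -> R) (J : R) :
  (forall x, continuous f x) -> (forall x, continuous g x) ->
  (forall x, Rabs (f x) <= g x) -> is_int_R g J -> exists I, is_int_R f I.
Proof.
  intros Hf Hg Hfg HJ.
  set (F := filter_prod (Rbar_locally m_infty) (Rbar_locally p_infty)).
  assert (PF : ProperFilter F).
  { apply filter_prod_proper; apply Rbar_locally_filter. }
  destruct (proj1 (filterlim_locally_cauchy (U:=R_CompleteSpace) (F:=F) (fun ab : R * R => RInt f (fst ab) (snd ab)))) as [y Hy].
  - intros eps.
    destruct (int_char_elim g J HJ (eps / 4)) as [M HM]. { destruct eps; simpl; lra. }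
    exists (fun ab : R * R => fst ab < - M /\ M < snd ab). split.
    + apply Filter_prod with (fun a => a < - M) (fun b => M < b).
      * exists (- M); auto.
      * exists M; auto.
      * simpl. auto.
    + intros [a b] [a' b'] [Ha Hb] [Ha' Hb']. simpl in *.
      change (Rabs (RInt f a' b' - RInt f a b) < eps).
      assert (E1 : RInt f a' b' = RInt f a' a + RInt f a b + RInt f b b').
      { pose proof (RInt_Chasles f a' a b' (exRInt f Hf _ _) (exRInt f Hf _ _)) as C.
        pose proof (RInt_Chasles f a b b' (exRInt f Hf _ _) (exRInt f Hf _ _)) as C'.
        change (RInt f a' a + RInt f a b' = RInt f a' b') in C.
        change (RInt f a b + RInt f b b' = RInt f a b') in C'. lra. }
      pose proof (RInt_abs_bound f g a' a Hf Hg Hfg) as B1.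
      pose proof (RInt_abs_bound f g b b' Hf Hg Hfg) as B2.
      assert (E2 : RInt g a' a = RInt g a' b - RInt g a b).
      { pose proof (RInt_Chasles g a' a b (exRInt g Hg _ _) (exRInt g Hg _ _)) as C.
        change (RInt g a' a + RInt g a b = RInt g a' b) in C. lra. }
      assert (E3 : RInt g b b' = RInt g a b' - RInt g a b).
      { pose proof (RInt_Chasles g a b b' (exRInt g Hg _ _) (exRInt g Hg _ _)) as C.
        change (RInt g a b + RInt g b b' = RInt g a b') in C. lra. }
      pose proof (HM a' b Ha' Hb). pose proof (HM a b Ha Hb). pose proof (HM a b' Ha Hb').
      rewrite E1. rewrite E2 in B1. rewrite E3 in B2.
      destruct eps as [e He]; simpl in *.
      pose proof (diff_lt _ _ _ _ H H0) as D1. pose proof (diff_lt _ _ _ _ H1 H0) as D2.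
      pose proof (Rabs_triang (RInt f a' a) (RInt f b b')).
      replace (RInt f a' a + RInt f a b + RInt f b b' - RInt f a b) with (RInt f a' a + RInt f b b') by ring.
      lra.
  - exists y. apply int_char_intro; auto.
    intros eps Heps.
    destruct (fprod_inf _ (Hy (ball y (mkposreal eps Heps)) (locally_ball y (mkposreal eps Heps)))) as [M HM].
    exists M. intros a b Ha Hb. specialize (HM a b Ha Hb). simpl in HM.
    exact HM.
Qed.

Lemma int_bound (f g : R -> R) (I J : R) :
  (forall x, continuous f x) -> (forall x, continuous g x) ->
  (forall x, Rabs (f x) <= g x) -> is_int_R f I -> is_int_R g J -> Rabs I <= Rabs J.
Proof.
  intros Hf Hg Hfg HI HJ.
  apply Rnot_lt_le. intro Hlt.
  set (e := (Rabs I - Rabs J) / 3).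
  assert (He : 0 < e) by (unfold e; lra).
  destruct (int_char_elim f I HI e He) as [M1 H1].
  destruct (int_char_elim g J HJ e He) as [M2 H2].
  set (M := Rmax (Rabs M1) (Rabs M2)).
  assert (HM1 : M1 <= M) by (unfold M; pose proof (Rle_abs M1); pose proof (Rmax_l (Rabs M1) (Rabs M2)); lra).
  assert (HM2 : M2 <= M) by (unfold M; pose proof (Rle_abs M2); pose proof (Rmax_r (Rabs M1) (Rabs M2)); lra).
  specialize (H1 (- M - 1) (M + 1) ltac:(lra) ltac:(lra)).
  specialize (H2 (- M - 1) (M + 1) ltac:(lra) ltac:(lra)).
  pose proof (RInt_abs_bound f g (- M - 1) (M + 1) Hf Hg Hfg).
  pose proof (Rabs_triang_inv I (RInt f (- M - 1) (M + 1))).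
  pose proof (Rabs_triang_inv (RInt g (- M - 1) (M + 1)) J).
  rewrite Rabs_minus_sym in H0. unfold e in *. lra.
Qed.

Lemma int_sym (f : R -> R) (I : R) :
  is_int_R f I -> forall eps, 0 < eps -> exists M, forall L, M < L -> Rabs (RInt f (- L) L - I) < eps.
Proof.
  intros H eps He. destruct (int_char_elim f I H eps He) as [M HM].
  exists M. intros L HL. apply HM; lra.
Qed.

Lemma small_zero (I : R) : (forall eps, 0 < eps -> Rabs I < eps) -> I = 0.
Proof.
  intros H. destruct (Req_dec I 0) as [E|E]; auto.
  specialize (H (Rabs I) (Rabs_pos_lt _ E)). lra.
Qed.

Lemma RInt_shift (f : R -> R) (s a b : R) :
  (forall x, continuous f x) ->
  RInt (fun x => f (x + s)) a b = RInt f (a + s) (b + s).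
Proof.
  intros Hc.
  rewrite <- (RInt_ext (fun y => scal 1 (f (1 * y + s)))).
  - replace (a + s) with (1 * a + s) by ring. replace (b + s) with (1 * b + s) by ring.
    exact (RInt_comp_lin (V:=R_CompleteNormedModule) f 1 s a b (exRInt f Hc _ _)).
  - intros x _. unfold scal; simpl; unfold mult; simpl. rewrite Rmult_1_l. f_equal. ring.
Qed.

Lemma int_shift (f : R -> R) (I s : R) :
  (forall x, continuous f x) -> is_int_R f I -> is_int_R (fun x => f (x + s)) I.
Proof.
  intros Hc H. apply int_char_intro.
  - intros x. apply continuous_comp; auto.
    apply (continuous_plus (fun x => x) (fun _ => s)). apply continuous_id. apply continuous_const.
  - intros eps He. destruct (int_char_elim f I H eps He) as [M HM].
    exists (M + Rabs s). intros a b Ha Hb. rewrite RInt_shift by auto.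
    pose proof (Rle_abs s). pose proof (Rle_abs (-s)). rewrite Rabs_Ropp in H1.
    apply HM; lra.
Qed.

Lemma RInt_odd (f : R -> R) (L : R) :
  (forall x, continuous f x) -> (forall x, f (- x) = - f x) -> RInt f (- L) L = 0.
Proof.
  intros Hc Ho.
  assert (E : RInt f (- L) L = RInt f L (- L)).
  { pose proof (RInt_comp_lin (V:=R_CompleteNormedModule) f (-1) 0 (-L) L (exRInt f Hc _ _)) as C.
    replace (-1 * - L + 0) with L in C by ring. replace (-1 * L + 0) with (- L) in C by ring.
    rewrite <- C. apply RInt_ext. intros x _. unfold scal; simpl; unfold mult; simpl.
    replace (-1 * x + 0) with (- x) by ring. rewrite Ho. ring. }
  pose proof (opp_RInt_swap f (-L) L (exRInt f Hc _ _)) as C2.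
  change (- RInt f (-L) L = RInt f L (-L)) in C2. lra.
Qed.

Lemma int_odd (f : R -> R) (I : R) :
  (forall x, continuous f x) -> (forall x, f (- x) = - f x) -> is_int_R f I -> I = 0.
Proof.
  intros Hc Ho H. apply small_zero. intros eps He.
  destruct (int_sym f I H eps He) as [M HM].
  specialize (HM (Rabs M + 1)). rewrite RInt_odd in HM by auto.
  rewrite Rminus_0_l, Rabs_Ropp in HM. apply HM. pose proof (Rle_abs M). lra.
Qed.

Lemma int_ftc (F f : R -> R) (la lb : R) :
  (forall x, is_derive F x (f x)) -> (forall x, continuous f x) ->
  (forall eps, 0 < eps -> exists M, forall x, M < x -> Rabs (F x - lb) < eps) ->
  (forall eps, 0 < eps -> exists M, forall x, x < - M -> Rabs (F x - la) < eps) ->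
  is_int_R f (lb - la).
Proof.
  intros HD Hc Hb Ha. apply int_char_intro; auto.
  intros eps He.
  destruct (Hb (eps/2)) as [M1 H1]; [lra|].
  destruct (Ha (eps/2)) as [M2 H2]; [lra|].
  exists (Rmax M1 M2). intros a b Ha' Hb'.
  assert (E : RInt f a b = F b - F a).
  { apply is_RInt_unique. apply (is_RInt_derive (V:=R_CompleteNormedModule) F f).
    intros; apply HD. intros; apply Hc. }
  rewrite E.
  specialize (H1 b ltac:(pose proof (Rmax_l M1 M2); lra)).
  specialize (H2 a ltac:(pose proof (Rmax_r M1 M2); lra)).
  replace (F b - F a - (lb - la)) with ((F b - lb) - (F a - la)) by ring.
  eapply Rle_lt_trans. apply Rabs_sub_le. lra.
Qed.

Lemma RInt_bound_const (h : R -> R) (p q B : R) :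
  (forall x, continuous h x) ->
  (forall t, Rmin p q <= t <= Rmax p q -> Rabs (h t) <= B) ->
  Rabs (RInt h p q) <= Rabs (q - p) * B.
Proof.
  intros Hc HB.
  destruct (Rle_dec p q) as [Hpq|Hpq].
  - pose proof (abs_RInt_le_const h p q B Hpq (exRInt h Hc p q)).
    rewrite (Rabs_right (q - p)) by lra. apply H. intros t Ht. apply HB.
    rewrite Rmin_left, Rmax_right by lra. auto.
  - pose proof (opp_RInt_swap h q p (exRInt h Hc _ _)) as C2.
    change (- RInt h q p = RInt h p q) in C2. rewrite <- C2.
    rewrite Rabs_Ropp. rewrite (Rabs_left (q - p)) by lra.
    pose proof (abs_RInt_le_const h q p B ltac:(lra) (exRInt h Hc q p)).
    replace (- (q - p)) with (p - q) by ring. apply H. intros t Ht. apply HB.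
    rewrite Rmin_right, Rmax_left by lra. auto.
Qed.


Lemma cont_mult (f g : R -> R) : (forall x, continuous f x) -> (forall x, continuous g x) ->
  forall x, continuous (fun x => f x * g x) x.
Proof. intros Hf Hg x. apply (continuous_mult f g); auto. Qed.

Lemma cont_minus (f g : R -> R) : (forall x, continuous f x) -> (forall x, continuous g x) ->
  forall x, continuous (fun x => f x - g x) x.
Proof. intros Hf Hg x. apply (continuous_minus f g); auto. Qed.

Lemma cont_shift (f : R -> R) s : (forall x, continuous f x) -> forall x, continuous (fun x => f (x + s)) x.
Proof.
  intros Hc x. apply continuous_comp; auto.
  apply (continuous_plus (fun x => x) (fun _ => s)). apply continuous_id. apply continuous_const.
Qed.

Lemma int_telescope (w g : R -> R) (c K I : R) :
  (forall x, continuous w x) -> (forall x, continuous g x) ->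
  (forall x, w (x - c) = w x) -> (forall x, Rabs (w x) <= 1) ->
  (forall x, Rabs x * Rabs (g x) <= K) ->
  is_int_R (fun x => w x * (g x - g (x - c))) I -> I = 0.
Proof.
  intros Hw Hg Hper Hb HK HI.
  assert (K0 : 0 <= K) by (specialize (HK 0); rewrite Rabs_R0 in HK; lra).
  set (wg := fun x => w x * g x).
  assert (Cwg : forall x, continuous wg x) by (apply cont_mult; auto).
  assert (Eq : forall L, 0 < L -> RInt (fun x => w x * (g x - g (x - c))) (- L) L
                = RInt wg (L - c) L - RInt wg (- L - c) (- L)).
  { intros L HL.
    assert (E1 : RInt (fun x => w x * (g x - g (x - c))) (- L) L
                 = RInt wg (- L) L - RInt (fun x => wg (x + - c)) (- L) L).
    { rewrite <- (RInt_minus (V:=R_CompleteNormedModule)).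
      - apply RInt_ext. intros x _. unfold wg, minus, plus, opp; simpl.
        replace (x + - c) with (x - c) by ring. rewrite Hper. ring.
      - apply exRInt; auto.
      - apply exRInt. apply cont_shift; auto. }
    rewrite E1. rewrite RInt_shift by auto.
    pose proof (RInt_Chasles wg (- L + - c) (- L) (L + - c) (exRInt _ Cwg _ _) (exRInt _ Cwg _ _)) as C1.
    pose proof (RInt_Chasles wg (- L) (L + - c) L (exRInt _ Cwg _ _) (exRInt _ Cwg _ _)) as C2.
    change (RInt wg (- L + - c) (- L) + RInt wg (- L) (L + - c) = RInt wg (- L + - c) (L + - c)) in C1.
    change (RInt wg (- L) (L + - c) + RInt wg (L + - c) L = RInt wg (- L) L) in C2.
    replace (L - c) with (L + - c) by ring. replace (- L - c) with (- L + - c) by ring. lra. }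
  apply small_zero. intros eps He.
  destruct (int_sym _ I HI (eps / 2)) as [M HM]; [lra|].
  set (L := Rmax (Rabs M + 1) (2 * Rabs c + 1 + 8 * Rabs c * K / eps)).
  assert (HL1 : Rabs M + 1 <= L) by apply Rmax_l.
  assert (HL2 : 2 * Rabs c + 1 + 8 * Rabs c * K / eps <= L) by apply Rmax_r.
  assert (Hc0 : 0 <= Rabs c) by apply Rabs_pos.
  assert (HcK : 0 <= 8 * Rabs c * K / eps).
  { apply Rmult_le_pos. apply Rmult_le_pos; lra. left; apply Rinv_0_lt_compat; lra. }
  assert (Lpos : 0 < L) by lra.
  specialize (HM L ltac:(pose proof (Rle_abs M); lra)).
  rewrite Eq in HM by lra.
  assert (Bnd : forall t, L - Rabs c <= Rabs t -> Rabs (wg t) <= 2 * K / L).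
  { intros t Ht. unfold wg. rewrite Rabs_mult.
    assert (Ht' : L / 2 <= Rabs t) by lra.
    assert (Hgt : Rabs (g t) <= 2 * K / L).
    { specialize (HK t). apply Rmult_le_reg_l with (L / 2). lra.
      replace (L / 2 * (2 * K / L)) with K by (field; lra). nra. }
    apply Rle_trans with (1 * (2 * K / L)); [|lra].
    apply Rmult_le_compat; auto using Rabs_pos. }
  assert (B1 : Rabs (RInt wg (L - c) L) <= Rabs c * (2 * K / L)).
  { eapply Rle_trans. apply RInt_bound_const; auto.
    - intros t Ht. apply Bnd.
      assert (L - Rabs c <= t).
      { pose proof (Rle_abs c). pose proof (Rle_abs (-c)). rewrite Rabs_Ropp in H0.
        unfold Rmin in Ht; destruct Rle_dec in Ht; lra. }
      rewrite (Rabs_right t); lra.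
    - replace (L - (L - c)) with c by ring. lra. }
  assert (B2 : Rabs (RInt wg (- L - c) (- L)) <= Rabs c * (2 * K / L)).
  { eapply Rle_trans. apply RInt_bound_const; auto.
    - intros t Ht. apply Bnd.
      assert (t <= - L + Rabs c).
      { pose proof (Rle_abs c). pose proof (Rle_abs (-c)). rewrite Rabs_Ropp in H0.
        unfold Rmax in Ht; destruct Rle_dec in Ht; lra. }
      rewrite (Rabs_left t); lra.
    - replace (- L - (- L - c)) with c by ring. lra. }
  assert (Small : Rabs c * (2 * K / L) <= eps / 4).
  { assert (8 * Rabs c * K / eps <= L) by lra.
    apply Rmult_le_reg_l with (4 * L / eps). apply Rmult_lt_0_compat. lra. apply Rinv_0_lt_compat; lra.
    replace (4 * L / eps * (Rabs c * (2 * K / L))) with (8 * Rabs c * K / eps) by (field; lra).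
    replace (4 * L / eps * (eps / 4)) with L by (field; lra). lra. }
  pose proof (Rabs_sub_le (RInt wg (L - c) L) (RInt wg (- L - c) (- L))).
  pose proof (Rabs_triang_inv I (RInt wg (L - c) L - RInt wg (- L - c) (- L))).
  rewrite (Rabs_minus_sym I) in H0. lra.
Qed.


Definition Q (s y x : R) := (x - s) ^ 2 + y ^ 2.
Definition bA (s y x : R) := ((x - s) ^ 2 - y ^ 2) / Q s y x ^ 2.
Definition bB (s y x : R) := (x - s) * y / Q s y x ^ 2.
Definition bC (s y x : R) := y / Q s y x.
Definition bD (c y x : R) := x / Q 0 y x - (x - c) / Q c y x.

Lemma Q_pos s y x : 0 < y -> 0 < Q s y x.
Proof. intros Hy. unfold Q. pose proof (pow2_ge_0 (x - s)). pose proof (pow2_gt_0 y). nra. Qed.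
Lemma Q_ne s y x : 0 < y -> Q s y x <> 0.
Proof. intros Hy. pose proof (Q_pos s y x Hy). lra. Qed.

Lemma Q_ge_x s y x : 0 < y -> (x - s) ^ 2 <= Q s y x.
Proof. intros. unfold Q. pose proof (pow2_ge_0 y). lra. Qed.
Lemma Q_ge_y s y x : 0 < y -> y ^ 2 <= Q s y x.
Proof. intros. unfold Q. pose proof (pow2_ge_0 (x - s)). lra. Qed.

Lemma atan_abs_le z : Rabs (atan z) <= Rabs z.
Proof.
  pose proof (bounded_variation atan (fun t => / (1 + t ^ 2)) 1 0 z) as H.
  rewrite atan_0, !Rminus_0_r, Rmult_1_l in H. apply H.
  intros t _. split.
  - apply is_derive_Reals. apply derivable_pt_lim_atan.
  - rewrite Rabs_right.
    + rewrite <- Rinv_1. apply Rinv_le_contravar. lra. pose proof (pow2_ge_0 t). lra.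
    + left. apply Rinv_0_lt_compat. pose proof (pow2_ge_0 t). lra.
Qed.

Lemma atan_lim_p eps : 0 < eps -> exists M, forall x, M < x -> Rabs (atan x - PI / 2) < eps.
Proof.
  intros He. exists (2 / eps). intros x Hx.
  assert (Hxp : 0 < x). { assert (0 < 2 / eps) by (apply Rdiv_lt_0_compat; lra). lra. }
  rewrite <- (Rinv_inv x) at 1. rewrite atan_inv by (apply Rinv_0_lt_compat; lra).
  replace (PI / 2 - atan (/ x) - PI / 2) with (- atan (/ x)) by ring.
  rewrite Rabs_Ropp. eapply Rle_lt_trans. apply atan_abs_le.
  rewrite Rabs_right by (left; apply Rinv_0_lt_compat; lra).
  apply Rmult_lt_reg_l with x. lra. rewrite Rinv_r by lra.
  apply Rmult_lt_reg_l with (/ eps). apply Rinv_0_lt_compat; lra.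
  replace (/ eps * (x * eps)) with x by (field; lra). unfold Rdiv in Hx. lra.
Qed.

Lemma atan_lim_m eps : 0 < eps -> exists M, forall x, x < - M -> Rabs (atan x - - (PI / 2)) < eps.
Proof.
  intros He. destruct (atan_lim_p eps He) as [M HM]. exists M. intros x Hx.
  specialize (HM (- x) ltac:(lra)). rewrite atan_opp in HM.
  replace (atan x - - (PI / 2)) with (- (- atan x - PI / 2)) by ring. rewrite Rabs_Ropp. auto.
Qed.

Lemma decay_p (F : R -> R) K : (forall x, Rabs x * Rabs (F x) <= K) ->
  forall eps, 0 < eps -> exists M, forall x, M < x -> Rabs (F x - 0) < eps.
Proof.
  intros HK eps He. exists (Rabs K / eps + 1). intros x Hx.
  assert (P : 0 <= Rabs K / eps) by (apply Rmult_le_pos; [apply Rabs_pos| left; apply Rinv_0_lt_compat; lra]).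
  assert (Hxp : 0 < x) by lra.
  rewrite Rminus_0_r. specialize (HK x). rewrite (Rabs_right x) in HK by lra.
  assert (x * eps > Rabs K).
  { apply Rmult_lt_reg_r with (/ eps). apply Rinv_0_lt_compat; lra.
    replace (x * eps * / eps) with x by (field; lra). unfold Rdiv in Hx. lra. }
  pose proof (Rle_abs K). pose proof (Rabs_pos (F x)).
  destruct (Rlt_dec (Rabs (F x)) eps); auto. nra.
Qed.

Lemma decay_m (F : R -> R) K : (forall x, Rabs x * Rabs (F x) <= K) ->
  forall eps, 0 < eps -> exists M, forall x, x < - M -> Rabs (F x - 0) < eps.
Proof.
  intros HK eps He. destruct (decay_p (fun x => F (- x)) K) with eps as [M HM]; auto.
  - intros x. rewrite <- Rabs_Ropp. apply HK.
  - exists M. intros x Hx. specialize (HM (- x) ltac:(lra)). rewrite Ropp_involutive in HM. auto.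
Qed.

Ltac nz := repeat match goal with
  | |- _ /\ _ => split
  | |- True => exact I
  | |- ?a * ?b <> 0 => apply Rmult_integral_contrapositive_currified
  | |- 1 <> 0 => exact R1_neq_R0
  end.

Lemma cont_bA s y : 0 < y -> forall x, continuous (bA s y) x.
Proof.
  intros Hy. apply cont_of_derive. intros x. unfold bA, Q. auto_derive. nz.
  all: pose proof (pow2_ge_0 (x - s)); apply Rgt_not_eq; nra.
Qed.
Lemma cont_bB s y : 0 < y -> forall x, continuous (bB s y) x.
Proof.
  intros Hy. apply cont_of_derive. intros x. unfold bB, Q. auto_derive. nz.
  all: pose proof (pow2_ge_0 (x - s)); apply Rgt_not_eq; nra.
Qed.
Lemma cont_bC s y : 0 < y -> forall x, continuous (bC s y) x.
Proof.
  intros Hy. apply cont_of_derive. intros x. unfold bC, Q. auto_derive. nz.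
  all: pose proof (pow2_ge_0 (x - s)); apply Rgt_not_eq; nra.
Qed.
Lemma cont_bD c y : 0 < y -> forall x, continuous (bD c y) x.
Proof.
  intros Hy. apply cont_of_derive. intros x. unfold bD, Q. auto_derive. nz.
  all: pose proof (pow2_ge_0 (x - c)); pose proof (pow2_ge_0 (x - 0)); apply Rgt_not_eq; nra.
Qed.


Lemma abs_frac a b q K : 0 < q -> Rabs (a * b) <= K * q -> Rabs a * Rabs (b / q) <= K.
Proof.
  intros Hq H. unfold Rdiv. rewrite Rabs_mult, <- Rmult_assoc, <- Rabs_mult.
  rewrite (Rabs_right (/ q)) by (left; apply Rinv_0_lt_compat; auto).
  apply Rmult_le_reg_r with q; auto. rewrite Rmult_assoc, Rinv_l by lra. lra.
Qed.

Lemma int1_bC y : 0 < y -> is_int_R (bC 0 y) PI.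
Proof.
  intros Hy.
  replace PI with (PI / 2 - - (PI / 2)) by field.
  apply int_ftc with (F := fun x => atan (x / y)).
  - intros x. unfold bC, Q. auto_derive. auto.
    field. split. pose proof (pow2_ge_0 x). nra. lra.
  - apply cont_bC; auto.
  - intros eps He. destruct (atan_lim_p eps He) as [M HM].
    exists (Rabs M * y). intros x Hx. apply HM.
    apply Rmult_lt_reg_r with y; auto. unfold Rdiv. rewrite Rmult_assoc, Rinv_l by lra.
    pose proof (Rle_abs M). nra.
  - intros eps He. destruct (atan_lim_m eps He) as [M HM].
    exists (Rabs M * y). intros x Hx. apply HM.
    apply Rmult_lt_reg_r with y; auto. unfold Rdiv. rewrite Rmult_assoc, Rinv_l by lra.
    pose proof (Rle_abs M). nra.
Qed.

Lemma int1_bA y : 0 < y -> is_int_R (bA 0 y) 0.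
Proof.
  intros Hy. replace 0 with (0 - 0) by ring.
  apply int_ftc with (F := fun x => - ((x - 0) / Q 0 y x)).
  - intros x. unfold bA, Q. auto_derive. pose proof (pow2_ge_0 (x - 0)); apply Rgt_not_eq; nra.
    field. pose proof (pow2_ge_0 (x - 0)); apply Rgt_not_eq; nra.
  - apply cont_bA; auto.
  - apply decay_p with 1. intros x. rewrite Rabs_Ropp. apply abs_frac. apply Q_pos; auto.
    rewrite Rmult_1_l. pose proof (Q_ge_x 0 y x Hy). rewrite Rabs_right; nra.
  - apply decay_m with 1. intros x. rewrite Rabs_Ropp. apply abs_frac. apply Q_pos; auto.
    rewrite Rmult_1_l. pose proof (Q_ge_x 0 y x Hy). rewrite Rabs_right; nra.
Qed.

Lemma int1_bB y : 0 < y -> is_int_R (bB 0 y) 0.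
Proof.
  intros Hy. replace 0 with (0 - 0) by ring.
  apply int_ftc with (F := fun x => - (y / 2 / Q 0 y x)).
  - intros x. unfold bB, Q. auto_derive. pose proof (pow2_ge_0 (x - 0)); apply Rgt_not_eq; nra.
    field. pose proof (pow2_ge_0 (x - 0)); apply Rgt_not_eq; nra.
  - apply cont_bB; auto.
  - apply decay_p with 1. intros x. rewrite Rabs_Ropp. apply abs_frac. apply Q_pos; auto.
    rewrite Rmult_1_l. unfold Q. apply Rabs_le. pose proof (pow2_ge_0 (x - 0 - y)). pose proof (pow2_ge_0 (x - 0 + y)). nra.
  - apply decay_m with 1. intros x. rewrite Rabs_Ropp. apply abs_frac. apply Q_pos; auto.
    rewrite Rmult_1_l. unfold Q. apply Rabs_le. pose proof (pow2_ge_0 (x - 0 - y)). pose proof (pow2_ge_0 (x - 0 + y)). nra.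
Qed.


Lemma sin_abs_le z : Rabs (sin z) <= Rabs z.
Proof.
  pose proof (bounded_variation sin cos 1 0 z) as H.
  rewrite sin_0, !Rminus_0_r, Rmult_1_l in H. apply H.
  intros t _. split.
  - apply is_derive_Reals. apply derivable_pt_lim_sin.
  - apply Rabs_le. pose proof (COS_bound t). lra.
Qed.

Lemma one_minus_cos x : 0 <= 1 - cos x <= 4 * (x ^ 2 / (1 + x ^ 2)).
Proof.
  pose proof (cos_2a_sin (x / 2)) as E. replace (2 * (x / 2)) with x in E by field.
  pose proof (sin_abs_le (x / 2)) as S1. pose proof (SIN_bound (x / 2)) as S2.
  set (s := sin (x / 2)) in *.
  assert (s * s <= x ^ 2 / 4).
  { assert (Rabs s * Rabs s <= Rabs (x/2) * Rabs (x/2)) by (apply Rmult_le_compat; auto using Rabs_pos).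
    rewrite <- !Rabs_mult in H. rewrite !Rabs_right in H by (apply Rle_ge; nra). nra. }
  assert (s * s <= 1) by nra.
  split. nra.
  apply Rmult_le_reg_r with (1 + x ^ 2). pose proof (pow2_ge_0 x); lra.
  replace (4 * (x ^ 2 / (1 + x ^ 2)) * (1 + x ^ 2)) with (4 * x ^ 2) by (field; pose proof (pow2_ge_0 x); lra).
  rewrite E. pose proof (pow2_ge_0 x). nra.
Qed.

Lemma per_helper (f : R -> R) (Hp : forall x k, f (x + 2 * INR k * PI) = f x) (x : R) (n : Z) :
  f (x - 2 * PI * IZR n) = f x.
Proof.
  destruct (Z_le_gt_dec 0 n) as [Hn|Hn].
  - destruct (Z_of_nat_complete n Hn) as [k ->]. rewrite <- INR_IZR_INZ.
    rewrite <- (Hp (x - 2 * PI * INR k) k). f_equal. ring.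
  - assert (0 <= - n)%Z by lia. destruct (Z_of_nat_complete (- n) H) as [k Hk].
    replace n with (- Z.of_nat k)%Z by lia. rewrite opp_IZR, <- INR_IZR_INZ.
    rewrite <- (Hp x k). f_equal. ring.
Qed.

Lemma cos_per x n : cos (x - 2 * PI * IZR n) = cos x.
Proof. apply per_helper. apply cos_period. Qed.
Lemma sin_per x n : sin (x - 2 * PI * IZR n) = sin x.
Proof. apply per_helper. apply sin_period. Qed.

Lemma deriv_param (w : R -> R) (phi phi' : R -> R -> R) (B : R -> R) (Phi : R -> R)
  (beta y delta Psi : R) :
  0 < delta -> (forall x, continuous w x) -> (forall x, Rabs (w x) <= 1) ->
  (forall s, Rabs (s - y) <= delta -> forall x, continuous (phi s) x) ->
  (forall x, continuous (phi' y) x) -> (forall x, continuous B x) ->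
  (forall s, Rabs (s - y) <= delta -> is_int_R (fun x => w x * phi s x) (Phi s)) ->
  is_int_R (fun x => w x * phi' y x) Psi ->
  is_int_R B beta ->
  (forall h x, Rabs h <= delta -> Rabs (phi (y + h) x - phi y x - h * phi' y x) <= h ^ 2 * B x) ->
  derivable_pt_lim Phi y Psi.
Proof.
  intros Hd Cw Bw Cphi Cphi' CB HPhi HPsi HB Htay.
  assert (Key : forall h, Rabs h <= delta -> Rabs (Phi (y + h) - Phi y - h * Psi) <= h ^ 2 * Rabs beta).
  { intros h Hh.
    assert (I1 : is_int_R (fun x => w x * (phi (y + h) x - phi y x - h * phi' y x))
                   (Phi (y + h) - Phi y - h * Psi)).
    { apply int_ext with (fun x => w x * phi (y + h) x - w x * phi y x - h * (w x * phi' y x)).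
      - intros; ring.
      - apply int_minus. apply int_minus. apply HPhi. replace (y + h - y) with h by ring. auto.
        apply HPhi. replace (y - y) with 0 by ring. rewrite Rabs_R0; lra.
        apply int_scal. auto. }
    assert (I2 : is_int_R (fun x => h ^ 2 * B x) (h ^ 2 * beta)) by (apply int_scal; auto).
    assert (C1 : forall x, continuous (fun x => w x * (phi (y + h) x - phi y x - h * phi' y x)) x).
    { apply cont_mult; auto. apply cont_minus; [apply cont_minus|].
      - apply Cphi. replace (y + h - y) with h by ring. auto.
      - apply Cphi. replace (y - y) with 0 by ring. rewrite Rabs_R0; lra.
      - apply (cont_mult (fun _ => h)). intros; apply continuous_const. auto. }
    assert (C2 : forall x, continuous (fun x => h ^ 2 * B x) x).
    { apply (cont_mult (fun _ => h ^ 2)). intros; apply continuous_const. auto. }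
    assert (B12 : forall x, Rabs (w x * (phi (y + h) x - phi y x - h * phi' y x)) <= h ^ 2 * B x).
    { intros x. rewrite Rabs_mult. apply Rle_trans with (1 * (h ^ 2 * B x)).
      apply Rmult_le_compat; auto using Rabs_pos. lra. }
    pose proof (int_bound _ _ _ _ C1 C2 B12 I1 I2) as Hb.
    rewrite Rabs_mult, (Rabs_right (h ^ 2)) in Hb by (apply Rle_ge, pow2_ge_0). exact Hb. }
  intros eps He.
  set (d := Rmin delta (eps / (Rabs beta + 1))).
  assert (Hdpos : 0 < d).
  { unfold d. apply Rmin_pos; auto. apply Rdiv_lt_0_compat; auto. pose proof (Rabs_pos beta); lra. }
  exists (mkposreal d Hdpos). intros h Hh0 Hh. simpl in Hh.
  assert (Hhd : Rabs h <= delta) by (pose proof (Rmin_l delta (eps / (Rabs beta + 1))); unfold d in Hh; lra).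
  specialize (Key h Hhd).
  replace ((Phi (y + h) - Phi y) / h - Psi) with ((Phi (y + h) - Phi y - h * Psi) / h) by (field; auto).
  unfold Rdiv. rewrite Rabs_mult, Rabs_inv.
  assert (Hh' : 0 < Rabs h) by (apply Rabs_pos_lt; auto).
  apply Rmult_lt_reg_r with (Rabs h); auto.
  rewrite Rmult_assoc, Rinv_l, Rmult_1_r by lra.
  replace (h ^ 2) with (Rabs h * Rabs h) in Key by (rewrite <- Rabs_mult; rewrite Rabs_right; [ring| apply Rle_ge; nra]).
  assert (Rabs h < eps / (Rabs beta + 1)) by (pose proof (Rmin_r delta (eps / (Rabs beta + 1))); unfold d in Hh; lra).
  assert (Rabs h * (Rabs beta + 1) < eps).
  { apply Rmult_lt_reg_r with (/ (Rabs beta + 1)). apply Rinv_0_lt_compat; pose proof (Rabs_pos beta); lra.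
    rewrite Rmult_assoc, Rinv_r by (pose proof (Rabs_pos beta); lra). unfold Rdiv in H. lra. }
  pose proof (Rabs_pos beta). nra.
Qed.

Lemma taylor2 (f f' f'' : R -> R) (y delta M : R) :
  (forall s, Rabs (s - y) <= delta -> is_derive f s (f' s)) ->
  (forall s, Rabs (s - y) <= delta -> is_derive f' s (f'' s)) ->
  (forall s, Rabs (s - y) <= delta -> Rabs (f'' s) <= M) ->
  forall h, Rabs h <= delta -> Rabs (f (y + h) - f y - h * f' y) <= h ^ 2 * M.
Proof.
  intros D1 D2 Bd h Hh.
  assert (M0 : 0 <= M) by (specialize (Bd y ltac:(rewrite Rminus_diag, Rabs_R0; pose proof (Rabs_pos h); lra)); pose proof (Rabs_pos (f'' y)); lra).
  pose proof (bounded_variation (fun t => f t - t * f' y) (fun t => f' t - f' y) (Rabs h * M) y (y + h)) as BV.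
  replace (f (y + h) - f y - h * f' y) with ((f (y + h) - (y + h) * f' y) - (f y - y * f' y)) by ring.
  replace (h ^ 2 * M) with (Rabs h * M * Rabs (y + h - y)).
  2:{ replace (y + h - y) with h by ring. replace (h ^ 2) with (Rabs h * Rabs h). ring.
      rewrite <- Rabs_mult. rewrite Rabs_right. ring. apply Rle_ge; nra. }
  apply BV. intros t Ht. replace (y + h - y) with h in Ht by ring. split.
  - apply (is_derive_minus (fun t => f t) (fun t => t * f' y)). apply D1. lra.
    auto_derive. auto. ring.
  - pose proof (bounded_variation f' f'' M y t) as BV2.
    eapply Rle_trans. apply BV2. intros u Hu. split. apply D2. lra. apply Bd. lra.
    rewrite Rmult_comm. apply Rmult_le_compat_r; auto.
Qed.

Lemma const_on_pos (u : R -> R) :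
  (forall t, 0 < t -> derivable_pt_lim u t 0) -> forall a b, 0 < a -> 0 < b -> u a = u b.
Proof.
  intros H a b Ha Hb.
  destruct (Rtotal_order a b) as [Hab|[Hab|Hab]].
  - destruct (MVT_cor2 u (fun _ => 0) a b Hab) as [c [Hc _]]. intros; apply H; lra. lra.
  - subst; auto.
  - destruct (MVT_cor2 u (fun _ => 0) b a Hab) as [c [Hc _]]. intros; apply H; lra. lra.
Qed.


Definition RIR (f : R -> R) : R := RInt_gen f (Rbar_locally m_infty) (Rbar_locally p_infty).

Lemma gen_correct f : (exists I, is_int_R f I) -> is_int_R f (RIR f).
Proof.
  intros [I H]. unfold RIR. rewrite (is_RInt_gen_unique f I H). exact H.
Qed.

Lemma int_invQ s t : 0 < t -> is_int_R (fun x => / Q s t x) (PI / t).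
Proof.
  intros Ht.
  assert (H1 : is_int_R (fun x => / t * bC 0 t x) (/ t * PI)) by (apply int_scal, int1_bC; auto).
  assert (H2 := int_shift _ _ (- s) (fun x => cont_mult (fun _ => / t) (bC 0 t) (fun _ => continuous_const _ _) (cont_bC 0 t Ht) x) H1).
  eapply int_ext; [|replace (PI / t) with (/ t * PI) by (unfold Rdiv; ring); exact H2].
  intros x. simpl. unfold bC, Q. field. split; [|lra].
  pose proof (pow2_ge_0 (x + - s - 0)). pose proof (pow2_gt_0 t). 
  replace ((x - s) ^ 2) with ((x + - s - 0) ^ 2) by ring. nra.
Qed.

Lemma cont_invQ s t : 0 < t -> forall x, continuous (fun x => / Q s t x) x.
Proof.
  intros Ht. apply cont_of_derive. intros x. unfold Q. auto_derive.
  pose proof (pow2_ge_0 (x - s)); apply Rgt_not_eq; nra.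
Qed.

Lemma dom_Q (f : R -> R) (K s t : R) : 0 < t -> (forall x, continuous f x) ->
  (forall x, Rabs (f x) <= K * / Q s t x) -> exists I, is_int_R f I.
Proof.
  intros Ht Hc Hb. apply int_dom with (fun x => K * / Q s t x) (K * (PI / t)); auto.
  - apply (cont_mult (fun _ => K)). intros; apply continuous_const. apply cont_invQ; auto.
  - apply int_scal, int_invQ; auto.
Qed.

Lemma dom_Q2 (f : R -> R) (K s1 s2 t : R) : 0 < t -> (forall x, continuous f x) ->
  (forall x, Rabs (f x) <= K * / Q s1 t x + K * / Q s2 t x) -> exists I, is_int_R f I.
Proof.
  intros Ht Hc Hb. apply int_dom with (fun x => K * / Q s1 t x + K * / Q s2 t x) (K * (PI / t) + K * (PI / t)); auto.
  - intros x. apply (continuous_plus (fun x => K * / Q s1 t x) (fun x => K * / Q s2 t x));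
    apply (cont_mult (fun _ => K)); try (intros; apply continuous_const); apply cont_invQ; auto.
  - apply int_plus; apply int_scal, int_invQ; auto.
Qed.

Lemma frac_bound N D R K : 0 < D -> 0 < R -> Rabs N * R <= K * D -> Rabs (N / D) <= K * / R.
Proof.
  intros HD HR H. unfold Rdiv. rewrite Rabs_mult, (Rabs_right (/ D)) by (left; apply Rinv_0_lt_compat; auto).
  apply Rmult_le_reg_r with (D * R). nra.
  replace (Rabs N * / D * (D * R)) with (Rabs N * R) by (field; lra).
  replace (K * / R * (D * R)) with (K * D) by (field; lra). auto.
Qed.

Ltac solveQ a := nz; try (pose proof (pow2_ge_0 a); apply Rgt_not_eq; nra).

Definition bE (s x : R) := 2 * s * (s ^ 2 - 3 * (x - 0) ^ 2) / Q 0 s x ^ 3.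
Definition bF (s x : R) := -6 * ((x - 0) ^ 4 - 6 * (x - 0) ^ 2 * s ^ 2 + s ^ 4) / Q 0 s x ^ 4.

Lemma dC x s : 0 < s -> is_derive (fun s => bC 0 s x) s (bA 0 s x).
Proof.
  intros Hs. unfold bC, bA, Q. auto_derive; [solveQ (x - 0) | field; solveQ (x - 0)].
Qed.

Lemma dA x s : 0 < s -> is_derive (fun s => bA 0 s x) s (bE s x).
Proof.
  intros Hs. unfold bE, bA, Q. auto_derive; [solveQ (x - 0) | field; solveQ (x - 0)].
Qed.

Lemma dE x s : 0 < s -> is_derive (fun s => bE s x) s (bF s x).
Proof.
  intros Hs. unfold bE, bF, Q. auto_derive; [solveQ (x - 0) | field; solveQ (x - 0)].
Qed.

Lemma bE_bound y s x : 0 < y -> Rabs (s - y) <= y / 2 -> Rabs (bE s x) <= 36 / y * / Q 0 (y / 2) x.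
Proof.
  intros Hy Hs. apply Rabs_le_between' in Hs.
  assert (Hs0 : 0 < s) by lra.
  unfold bE. apply frac_bound.
  - apply pow_lt, Q_pos; lra.
  - apply Q_pos; lra.
  - set (q := Q 0 s x). set (r := Q 0 (y / 2) x).
    assert (Hq : 0 < q) by (apply Q_pos; lra).
    assert (Hrq : r <= q) by (unfold r, q, Q; nra).
    assert (Hr : 0 < r) by (apply Q_pos; lra).
    assert (Hyq : y ^ 2 <= 4 * q) by (unfold q, Q; pose proof (pow2_ge_0 (x - 0)); nra).
    assert (HN : Rabs (2 * s * (s ^ 2 - 3 * (x - 0) ^ 2)) <= 6 * s * q).
    { apply Rabs_le. unfold q, Q. pose proof (pow2_ge_0 (x - 0)). nra. }
    apply Rmult_le_reg_l with y; auto.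
    replace (y * (36 / y * q ^ 3)) with (36 * q ^ 3) by (field; lra).
    apply Rle_trans with (y * (6 * s * q) * r).
    { rewrite <- Rmult_assoc. apply Rmult_le_compat_r; [lra|]. apply Rmult_le_compat_l; lra. }
    apply Rle_trans with (9 * y ^ 2 * q * r).
    { assert (6 * s * y <= 9 * y ^ 2) by nra.
      replace (y * (6 * s * q) * r) with ((6 * s * y) * (q * r)) by ring.
      replace (9 * y ^ 2 * q * r) with ((9 * y ^ 2) * (q * r)) by ring.
      apply Rmult_le_compat_r; nra. }
    replace (9 * y ^ 2 * q * r) with ((9 * y ^ 2) * (q * r)) by ring.
    replace (36 * q ^ 3) with ((36 * q) * (q * q)) by ring.
    apply Rmult_le_compat; nra.
Qed.

Lemma bF_bound y s x : 0 < y -> Rabs (s - y) <= y / 2 -> Rabs (bF s x) <= 72 / y ^ 2 * / Q 0 (y / 2) x.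
Proof.
  intros Hy Hs. apply Rabs_le_between' in Hs.
  assert (Hs0 : 0 < s) by lra.
  unfold bF. apply frac_bound.
  - apply pow_lt, Q_pos; lra.
  - apply Q_pos; lra.
  - set (q := Q 0 s x). set (r := Q 0 (y / 2) x).
    assert (Hq : 0 < q) by (apply Q_pos; lra).
    assert (Hrq : r <= q) by (unfold r, q, Q; nra).
    assert (Hr : 0 < r) by (apply Q_pos; lra).
    assert (Hyq : y ^ 2 <= 4 * q) by (unfold q, Q; pose proof (pow2_ge_0 (x - 0)); nra).
    assert (HN : Rabs (-6 * ((x - 0) ^ 4 - 6 * (x - 0) ^ 2 * s ^ 2 + s ^ 4)) <= 18 * q ^ 2).
    { apply Rabs_le. unfold q, Q. pose proof (pow2_ge_0 (x - 0)). pose proof (pow2_ge_0 s).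
      pose proof (pow2_ge_0 ((x-0)^2 - s ^ 2)). nra. }
    assert (Hy2 : 0 < y ^ 2) by (apply pow_lt; lra).
    apply Rmult_le_reg_l with (y ^ 2); auto.
    replace (y ^ 2 * (72 / y ^ 2 * q ^ 4)) with (72 * q ^ 4) by (field; lra).
    apply Rle_trans with (y ^ 2 * (18 * q ^ 2) * r).
    { rewrite <- Rmult_assoc. apply Rmult_le_compat_r; [lra|]. apply Rmult_le_compat_l; lra. }
    replace (y ^ 2 * (18 * q ^ 2) * r) with ((18 * y ^ 2) * (q ^ 2 * r)) by ring.
    replace (72 * q ^ 4) with ((18 * (4 * q)) * (q ^ 2 * q)) by ring.
    assert (0 < q ^ 2) by (apply pow_lt; lra).
    apply Rmult_le_compat; nra.
Qed.


Definition Fc s := RIR (fun x => cos x * bC 0 s x).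
Definition Gc s := RIR (fun x => cos x * bA 0 s x).
Definition Hc s := RIR (fun x => cos x * bE s x).

Lemma cont_cos : forall x, continuous cos x.
Proof. apply cont_of_derive. intros; auto_derive; auto. Qed.
Lemma cont_sin : forall x, continuous sin x.
Proof. apply cont_of_derive. intros; auto_derive; auto. Qed.

Lemma cont_bE s : 0 < s -> forall x, continuous (bE s) x.
Proof. intros Hs. apply cont_of_derive. intros x. unfold bE, Q. auto_derive. solveQ (x - 0). Qed.

Lemma cos_dom (f : R -> R) K x : Rabs (f x) <= K -> Rabs (cos x * f x) <= K.
Proof. intros H. rewrite Rabs_mult. apply Rle_trans with (1 * K). apply Rmult_le_compat; auto using Rabs_pos.
  apply Rabs_le. apply COS_bound. pose proof (Rabs_pos (f x)). lra. Qed.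
Lemma sin_dom (f : R -> R) K x : Rabs (f x) <= K -> Rabs (sin x * f x) <= K.
Proof. intros H. rewrite Rabs_mult. apply Rle_trans with (1 * K). apply Rmult_le_compat; auto using Rabs_pos.
  apply Rabs_le. apply SIN_bound. pose proof (Rabs_pos (f x)). lra. Qed.

Lemma bC_bnd s x : 0 < s -> Rabs (bC 0 s x) <= s * / Q 0 s x.
Proof. intros Hs. unfold bC. rewrite Rabs_right. lra. apply Rle_ge. unfold Rdiv. apply Rmult_le_pos. lra.
  left; apply Rinv_0_lt_compat, Q_pos; auto. Qed.
Lemma bA_bnd s x : 0 < s -> Rabs (bA 0 s x) <= 1 * / Q 0 s x.
Proof. intros Hs. unfold bA. apply frac_bound. apply pow_lt, Q_pos; auto. apply Q_pos; auto.
  pose proof (Q_pos 0 s x Hs). assert (Rabs ((x - 0) ^ 2 - s ^ 2) <= Q 0 s x).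
  { apply Rabs_le. unfold Q. pose proof (pow2_ge_0 (x - 0)). pose proof (pow2_ge_0 s). lra. }
  replace (1 * Q 0 s x ^ 2) with (Q 0 s x * Q 0 s x) by ring. apply Rmult_le_compat_r; lra. Qed.
Lemma bE_bnd s x : 0 < s -> Rabs (bE s x) <= 6 / s * / Q 0 s x.
Proof. intros Hs. unfold bE. apply frac_bound. apply pow_lt, Q_pos; auto. apply Q_pos; auto.
  set (q := Q 0 s x). assert (Hq : 0 < q) by (apply Q_pos; auto).
  assert (HN : Rabs (2 * s * (s ^ 2 - 3 * (x - 0) ^ 2)) <= 6 * s * q).
  { apply Rabs_le. unfold q, Q. pose proof (pow2_ge_0 (x - 0)). nra. }
  assert (Hsq : s ^ 2 <= q) by (unfold q, Q; pose proof (pow2_ge_0 (x - 0)); lra).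
  apply Rmult_le_reg_l with s; auto.
  replace (s * (6 / s * q ^ 3)) with (6 * q ^ 3) by (field; lra).
  apply Rle_trans with (s * (6 * s * q) * q).
  { rewrite <- Rmult_assoc. apply Rmult_le_compat_r; [lra|]. apply Rmult_le_compat_l; lra. }
  replace (s * (6 * s * q) * q) with ((6 * s ^ 2) * (q * q)) by ring.
  replace (6 * q ^ 3) with ((6 * q) * (q * q)) by ring.
  apply Rmult_le_compat_r; nra. Qed.

Lemma cont_cosf f : (forall x, continuous f x) -> forall x, continuous (fun x => cos x * f x) x.
Proof. intros. apply cont_mult; auto. apply cont_cos. Qed.
Lemma cont_sinf f : (forall x, continuous f x) -> forall x, continuous (fun x => sin x * f x) x.
Proof. intros. apply cont_mult; auto. apply cont_sin. Qed.

Lemma Fc_int s : 0 < s -> is_int_R (fun x => cos x * bC 0 s x) (Fc s).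
Proof. intros Hs. apply gen_correct. apply dom_Q with s 0 s; auto.
  apply cont_cosf, cont_bC; auto. intros x. apply cos_dom, bC_bnd; auto. Qed.
Lemma Gc_int s : 0 < s -> is_int_R (fun x => cos x * bA 0 s x) (Gc s).
Proof. intros Hs. apply gen_correct. apply dom_Q with 1 0 s; auto.
  apply cont_cosf, cont_bA; auto. intros x. apply cos_dom, bA_bnd; auto. Qed.
Lemma Hc_int s : 0 < s -> is_int_R (fun x => cos x * bE s x) (Hc s).
Proof. intros Hs. apply gen_correct. apply dom_Q with (6 / s) 0 s; auto.
  apply cont_cosf, cont_bE; auto. intros x. apply cos_dom, bE_bnd; auto. Qed.

Lemma int_byparts (f h F d : R -> R) (J K : R) :
  is_int_R h J -> (forall x, is_derive F x (d x)) -> (forall x, continuous d x) ->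
  (forall x, Rabs x * Rabs (F x) <= K) -> (forall x, f x = h x + d x) -> is_int_R f J.
Proof.
  intros Hh HD Hd HK E.
  assert (I0 : is_int_R d (0 - 0)).
  { apply int_ftc with F; auto. apply decay_p with K; auto. apply decay_m with K; auto. }
  replace J with (J + (0 - 0)) by ring.
  apply int_ext with (fun x => h x + d x). intros; auto.
  apply int_plus; auto.
Qed.

Lemma Hc_eq s : 0 < s -> Hc s = Fc s.
Proof.
  intros Hs. apply (int_unique (fun x => cos x * bE s x)). apply Hc_int; auto.
  apply int_byparts with (h := fun x => cos x * bC 0 s x)
     (F := fun x => 2 * cos x * bB 0 s x - sin x * bC 0 s x)
     (d := fun x => cos x * bE s x - cos x * bC 0 s x) (K := 2 / s + 1 / 2).
  - apply Fc_int; auto.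
  - intros x. unfold bB, bC, bE, Q. auto_derive; [solveQ (x - 0) | field; solveQ (x - 0)].
  - apply cont_minus; apply cont_cosf; [apply cont_bE | apply cont_bC]; auto.
  - intros x.
    assert (H1 : Rabs x * Rabs (bB 0 s x) <= 1 / s).
    { unfold bB. apply abs_frac. apply pow_lt, Q_pos; auto.
      apply Rabs_le. unfold Q. pose proof (pow2_ge_0 (x - 0)). pose proof (pow2_ge_0 s).
      assert (0 < s ^ 2) by (apply pow_lt; auto).
      split.
      - apply Rle_trans with 0. apply Rge_le, Ropp_0_le_ge_contravar. apply Rmult_le_pos. unfold Rdiv; apply Rmult_le_pos; [lra|]; left; apply Rinv_0_lt_compat; auto. nra.
        replace (x * ((x - 0) * s)) with (x ^ 2 * s) by ring. nra.
      - apply Rmult_le_reg_l with s; auto. replace (s * (1 / s * ((x - 0) ^ 2 + s ^ 2) ^ 2)) with (((x - 0) ^ 2 + s ^ 2) ^ 2) by (field; lra).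
        replace (x - 0) with x by ring. nra. }
    assert (H2 : Rabs x * Rabs (bC 0 s x) <= 1 / 2).
    { unfold bC. apply abs_frac. apply Q_pos; auto. apply Rabs_le. unfold Q.
      pose proof (pow2_ge_0 (x - 0 - s)). pose proof (pow2_ge_0 (x - 0 + s)). replace (x - 0) with x in * by ring. nra. }
    assert (H3 : Rabs (2 * cos x * bB 0 s x - sin x * bC 0 s x) <= 2 * Rabs (bB 0 s x) + Rabs (bC 0 s x)).
    { eapply Rle_trans. apply Rabs_sub_le. rewrite Rmult_assoc, !Rabs_mult.
      rewrite (Rabs_right 2) by lra.
      pose proof (cos_dom (bB 0 s) (Rabs (bB 0 s x)) x (Rle_refl _)). rewrite Rabs_mult in H.
      pose proof (sin_dom (bC 0 s) (Rabs (bC 0 s x)) x (Rle_refl _)). rewrite Rabs_mult in H0. lra. }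
    apply Rle_trans with (Rabs x * (2 * Rabs (bB 0 s x) + Rabs (bC 0 s x))).
    apply Rmult_le_compat_l; auto using Rabs_pos. nra.
  - intros x. ring.
Qed.


Lemma near_pos y s : 0 < y -> Rabs (s - y) <= y / 2 -> 0 < s.
Proof. intros Hy H. apply Rabs_le_between' in H. lra. Qed.

Lemma Fc_deriv y : 0 < y -> derivable_pt_lim Fc y (Gc y).
Proof.
  intros Hy.
  apply deriv_param with (w := cos) (phi := fun s x => bC 0 s x) (phi' := fun s x => bA 0 s x)
    (B := fun x => 36 / y * / Q 0 (y / 2) x) (beta := 36 / y * (PI / (y / 2))) (delta := y / 2).
  - lra.
  - apply cont_cos.
  - intros; apply Rabs_le, COS_bound.
  - intros s Hs. apply cont_bC. eapply near_pos; eauto.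
  - apply cont_bA; auto.
  - apply (cont_mult (fun _ => 36 / y)). intros; apply continuous_const. apply cont_invQ; lra.
  - intros s Hs. apply Fc_int. eapply near_pos; eauto.
  - apply Gc_int; auto.
  - apply int_scal, int_invQ; lra.
  - intros h x Hh.
    apply (taylor2 (fun s => bC 0 s x) (fun s => bA 0 s x) (fun s => bE s x) y (y / 2)); auto.
    + intros s Hs. apply dC. eapply near_pos; eauto.
    + intros s Hs. apply dA. eapply near_pos; eauto.
    + intros s Hs. apply bE_bound; auto.
Qed.

Lemma Gc_deriv y : 0 < y -> derivable_pt_lim Gc y (Fc y).
Proof.
  intros Hy. rewrite <- Hc_eq by auto.
  apply deriv_param with (w := cos) (phi := fun s x => bA 0 s x) (phi' := fun s x => bE s x)
    (B := fun x => 72 / y ^ 2 * / Q 0 (y / 2) x) (beta := 72 / y ^ 2 * (PI / (y / 2))) (delta := y / 2).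
  - lra.
  - apply cont_cos.
  - intros; apply Rabs_le, COS_bound.
  - intros s Hs. apply cont_bA. eapply near_pos; eauto.
  - apply cont_bE; auto.
  - apply (cont_mult (fun _ => 72 / y ^ 2)). intros; apply continuous_const. apply cont_invQ; lra.
  - intros s Hs. apply Gc_int. eapply near_pos; eauto.
  - apply Hc_int; auto.
  - apply int_scal, int_invQ; lra.
  - intros h x Hh.
    apply (taylor2 (fun s => bA 0 s x) (fun s => bE s x) (fun s => bF s x) y (y / 2)); auto.
    + intros s Hs. apply dA. eapply near_pos; eauto.
    + intros s Hs. apply dE. eapply near_pos; eauto.
    + intros s Hs. apply bF_bound; auto.
Qed.

Lemma bC_nonneg s x : 0 < s -> 0 <= bC 0 s x.
Proof. intros Hs. unfold bC. unfold Rdiv. apply Rmult_le_pos. lra. left; apply Rinv_0_lt_compat, Q_pos; auto. Qed.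

Lemma Fc_bnd y : 0 < y -> Rabs (Fc y) <= PI.
Proof.
  intros Hy.
  assert (B : forall x, Rabs (cos x * bC 0 y x) <= bC 0 y x).
  { intros x. apply cos_dom. rewrite Rabs_right. lra. apply Rle_ge, bC_nonneg; auto. }
  pose proof (int_bound _ _ _ _ (cont_cosf _ (cont_bC 0 y Hy)) (cont_bC 0 y Hy) B (Fc_int y Hy) (int1_bC y Hy)) as H.
  rewrite (Rabs_right PI) in H. auto. apply Rle_ge. left; apply PI_RGT_0.
Qed.

Lemma Gc_bnd y : 0 < y -> Rabs (Gc y) <= PI / y.
Proof.
  intros Hy.
  assert (B : forall x, Rabs (cos x * bA 0 y x) <= / Q 0 y x).
  { intros x. apply cos_dom. rewrite <- (Rmult_1_l (/ Q 0 y x)). apply bA_bnd; auto. }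
  pose proof (int_bound _ _ _ _ (cont_cosf _ (cont_bA 0 y Hy)) (cont_invQ 0 y Hy) B (Gc_int y Hy) (int_invQ 0 y Hy)) as H.
  rewrite (Rabs_right (PI / y)) in H. auto. apply Rle_ge. left. apply Rdiv_lt_0_compat; auto. apply PI_RGT_0.
Qed.

Lemma Fc_near y : 0 < y -> Rabs (Fc y - PI) <= 4 * PI * y.
Proof.
  intros Hy.
  assert (I1 : is_int_R (fun x => cos x * bC 0 y x - bC 0 y x) (Fc y - PI)).
  { apply int_minus. apply Fc_int; auto. apply int1_bC; auto. }
  assert (I2 : is_int_R (fun x => 4 * y * / Q 0 1 x) (4 * y * (PI / 1))).
  { apply int_scal, int_invQ; lra. }
  assert (B : forall x, Rabs (cos x * bC 0 y x - bC 0 y x) <= 4 * y * / Q 0 1 x).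
  { intros x. pose proof (one_minus_cos x) as [C1 C2].
    replace (cos x * bC 0 y x - bC 0 y x) with (- ((1 - cos x) * bC 0 y x)) by ring.
    rewrite Rabs_Ropp. rewrite Rabs_right by (apply Rle_ge, Rmult_le_pos; auto; apply bC_nonneg; auto).
    unfold bC. assert (Q0 : 0 < Q 0 y x) by (apply Q_pos; auto). assert (Q1 : 0 < Q 0 1 x) by (apply Q_pos; lra).
    assert (Hx : (x - 0) ^ 2 <= Q 0 y x) by (apply Q_ge_x; auto).
    assert (E1 : Q 0 1 x = 1 + x ^ 2) by (unfold Q; ring).
    assert (Hc : (1 - cos x) * Q 0 1 x <= 4 * x ^ 2).
    { rewrite E1. apply Rmult_le_reg_r with (/ (1 + x ^ 2)). apply Rinv_0_lt_compat; rewrite <- E1; auto.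
      rewrite Rmult_assoc, Rinv_r by (rewrite <- E1; lra). rewrite Rmult_1_r. unfold Rdiv in C2. lra. }
    apply Rmult_le_reg_r with (Q 0 y x * Q 0 1 x). nra.
    replace ((1 - cos x) * (y / Q 0 y x) * (Q 0 y x * Q 0 1 x)) with (y * ((1 - cos x) * Q 0 1 x)) by (field; lra).
    replace (4 * y * / Q 0 1 x * (Q 0 y x * Q 0 1 x)) with (4 * y * Q 0 y x) by (field; lra).
    replace (x - 0) with x in Hx by ring. nra. }
  assert (C : forall x, continuous (fun x => cos x * bC 0 y x - bC 0 y x) x).
  { apply cont_minus. apply cont_cosf, cont_bC; auto. apply cont_bC; auto. }
  pose proof (int_bound _ _ _ _ C (cont_mult (fun _ => 4 * y) _ (fun _ => continuous_const _ _) (cont_invQ 0 1 ltac:(lra))) B I1 I2) as H.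
  rewrite (Rabs_right (4 * y * (PI / 1))) in H. unfold Rdiv in H; rewrite Rinv_1 in H. lra. apply Rle_ge. pose proof PI_RGT_0. unfold Rdiv. rewrite Rinv_1. nra.
Qed.

Lemma exp_neg_deriv t : derivable_pt_lim (fun y => exp (- y)) t (- exp (- t)).
Proof. apply is_derive_Reals. auto_derive; auto. ring. Qed.

Lemma exp_pos_deriv t : derivable_pt_lim (fun y => exp y) t (exp t).
Proof. apply derivable_pt_lim_exp. Qed.

Lemma FG_sum y : 0 < y -> Gc y = - Fc y.
Proof.
  intros Hy.
  set (u := fun t => (Fc t + Gc t) * exp (- t)).
  assert (Du : forall t, 0 < t -> derivable_pt_lim u t 0).
  { intros t Ht.
    assert (D := derivable_pt_lim_mult (fun t => Fc t + Gc t) (fun t => exp (- t)) t _ _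
       (derivable_pt_lim_plus Fc Gc t _ _ (Fc_deriv t Ht) (Gc_deriv t Ht)) (exp_neg_deriv t)).
    replace 0 with ((Gc t + Fc t) * exp (- t) + (Fc t + Gc t) * - exp (- t)) by ring. exact D. }
  assert (A0 : u 1 = 0).
  { apply small_zero. intros eps He.
    set (z := Rmax 1 (4 * PI / eps)).
    assert (Hz1 : 1 <= z) by apply Rmax_l.
    assert (Hz2 : 4 * PI / eps <= z) by apply Rmax_r.
    rewrite (const_on_pos u Du 1 z) by lra.
    unfold u. rewrite Rabs_mult, (Rabs_right (exp (- z))) by (apply Rle_ge; left; apply exp_pos).
    pose proof (Fc_bnd z ltac:(lra)). pose proof (Gc_bnd z ltac:(lra)).
    assert (PI / z <= PI) by (pose proof PI_RGT_0; apply Rmult_le_reg_r with z; [lra|]; unfold Rdiv; rewrite Rmult_assoc, Rinv_l by lra; nra).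
    assert (S1 : Rabs (Fc z + Gc z) <= 2 * PI) by (pose proof (Rabs_triang (Fc z) (Gc z)); lra).
    assert (E1 : exp (- z) * (1 + z) <= 1).
    { pose proof (exp_ineq1 z ltac:(lra)). rewrite exp_Ropp.
      apply Rmult_le_reg_l with (exp z). apply exp_pos. rewrite <- Rmult_assoc, Rinv_r by (apply Rgt_not_eq, exp_pos). lra. }
    assert (E2 : 4 * PI < eps * (1 + z)).
    { apply Rmult_le_compat_l with (r := eps) in Hz2; [|lra].
      replace (eps * (4 * PI / eps)) with (4 * PI) in Hz2 by (field; lra). nra. }
    pose proof (exp_pos (- z)). pose proof PI_RGT_0.
    apply Rle_lt_trans with (2 * PI * exp (- z)). apply Rmult_le_compat_r; lra.
    apply Rmult_lt_reg_r with (1 + z). lra. nra. }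
  assert (Hu : u y = 0) by (rewrite <- A0; apply const_on_pos; auto; lra).
  unfold u in Hu. apply Rmult_integral in Hu. destruct Hu as [Hu|Hu]. lra.
  pose proof (exp_pos (- y)). lra.
Qed.

Lemma Fc_val y : 0 < y -> Fc y = PI * exp (- y).
Proof.
  intros Hy.
  set (v := fun t => Fc t * exp t).
  assert (Dv : forall t, 0 < t -> derivable_pt_lim v t 0).
  { intros t Ht.
    assert (D := derivable_pt_lim_mult Fc (fun t => exp t) t _ _ (Fc_deriv t Ht) (exp_pos_deriv t)).
    replace 0 with (Gc t * exp t + Fc t * exp t) by (rewrite FG_sum by auto; ring). exact D. }
  set (K := v 1).
  assert (HK : forall t, 0 < t -> Fc t = K * exp (- t)).
  { intros t Ht. unfold K. rewrite (const_on_pos v Dv 1 t) by lra. unfold v.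
    rewrite Rmult_assoc, <- exp_plus. replace (t + - t) with 0 by ring. rewrite exp_0. ring. }
  assert (KP : K = PI).
  { apply Rminus_diag_uniq. apply small_zero. intros eps He.
    pose proof PI_RGT_0. pose proof (Rabs_pos K).
    set (z := eps / (2 * (Rabs K + 4 * PI))).
    assert (Hz : 0 < z) by (apply Rdiv_lt_0_compat; lra).
    pose proof (Fc_near z Hz) as N. rewrite HK in N by auto.
    assert (E1 : 1 - z <= exp (- z)) by (pose proof (exp_ineq1 (- z) ltac:(lra)); lra).
    assert (E2 : exp (- z) <= 1) by (rewrite <- exp_0; left; apply exp_increasing; lra).
    assert (T : Rabs (K - PI) <= Rabs K * z + 4 * PI * z).
    { replace (K - PI) with (K * (1 - exp (- z)) + (K * exp (- z) - PI)) by ring.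
      eapply Rle_trans. apply Rabs_triang. rewrite Rabs_mult.
      rewrite (Rabs_right (1 - exp (- z))) by lra.
      apply Rplus_le_compat; auto. apply Rmult_le_compat_l; lra. }
    assert ((Rabs K + 4 * PI) * z = eps / 2) by (unfold z; field; lra).
    lra. }
  rewrite HK by auto. rewrite KP. ring.
Qed.

Lemma base_cosC y : 0 < y -> is_int_R (fun x => cos x * bC 0 y x) (PI * exp (- y)).
Proof. intros Hy. rewrite <- Fc_val by auto. apply Fc_int; auto. Qed.

Lemma base_cosA y : 0 < y -> is_int_R (fun x => cos x * bA 0 y x) (- (PI * exp (- y))).
Proof. intros Hy. rewrite <- Fc_val, <- FG_sum by auto. apply Gc_int; auto. Qed.


Lemma bB_bnd s x : 0 < s -> Rabs (bB 0 s x) <= 1 / 2 * / Q 0 s x.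
Proof. intros Hs. unfold bB. apply frac_bound. apply pow_lt, Q_pos; auto. apply Q_pos; auto.
  pose proof (Q_pos 0 s x Hs). assert (Rabs ((x - 0) * s) <= 1 / 2 * Q 0 s x).
  { apply Rabs_le. unfold Q. pose proof (pow2_ge_0 (x - 0 - s)). pose proof (pow2_ge_0 (x - 0 + s)). nra. }
  replace (1 / 2 * Q 0 s x ^ 2) with ((1 / 2 * Q 0 s x) * Q 0 s x) by ring. apply Rmult_le_compat_r; lra. Qed.

Lemma cont_one : forall x : R, continuous (fun _ : R => 1) x.
Proof. intros; apply continuous_const. Qed.

Lemma base_cosB y : 0 < y -> is_int_R (fun x => cos x * bB 0 y x) 0.
Proof.
  intros Hy. destruct (dom_Q (fun x => cos x * bB 0 y x) (1/2) 0 y Hy (cont_cosf _ (cont_bB 0 y Hy))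
     (fun x => cos_dom _ _ x (bB_bnd y x Hy))) as [I HI].
  enough (E : I = 0) by (rewrite E in HI; exact HI). apply int_odd with (fun x => cos x * bB 0 y x); auto.
  apply cont_cosf, cont_bB; auto.
  intros x. rewrite cos_neg. unfold bB, Q. replace ((- x - 0) ^ 2) with ((x - 0) ^ 2) by ring.
  unfold Rdiv; ring.
Qed.

Lemma base_sinA y : 0 < y -> is_int_R (fun x => sin x * bA 0 y x) 0.
Proof.
  intros Hy. destruct (dom_Q (fun x => sin x * bA 0 y x) 1 0 y Hy (cont_sinf _ (cont_bA 0 y Hy))
     (fun x => sin_dom _ _ x (bA_bnd y x Hy))) as [I HI].
  enough (E : I = 0) by (rewrite E in HI; exact HI). apply int_odd with (fun x => sin x * bA 0 y x); auto.
  apply cont_sinf, cont_bA; auto.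
  intros x. rewrite sin_neg. unfold bA, Q. replace ((- x - 0) ^ 2) with ((x - 0) ^ 2) by ring.
  unfold Rdiv; ring.
Qed.

Lemma base_sinC y : 0 < y -> is_int_R (fun x => sin x * bC 0 y x) 0.
Proof.
  intros Hy. destruct (dom_Q (fun x => sin x * bC 0 y x) y 0 y Hy (cont_sinf _ (cont_bC 0 y Hy))
     (fun x => sin_dom _ _ x (bC_bnd y x Hy))) as [I HI].
  enough (E : I = 0) by (rewrite E in HI; exact HI). apply int_odd with (fun x => sin x * bC 0 y x); auto.
  apply cont_sinf, cont_bC; auto.
  intros x. rewrite sin_neg. unfold bC, Q. replace ((- x - 0) ^ 2) with ((x - 0) ^ 2) by ring.
  unfold Rdiv; ring.
Qed.

Lemma base_sinB y : 0 < y -> is_int_R (fun x => sin x * bB 0 y x) (/ 2 * (PI * exp (- y))).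
Proof.
  intros Hy.
  apply int_byparts with (h := fun x => / 2 * (cos x * bC 0 y x))
     (F := fun x => - / 2 * (sin x * bC 0 y x))
     (d := fun x => sin x * bB 0 y x - / 2 * (cos x * bC 0 y x)) (K := 1 / 4).
  - apply int_scal, base_cosC; auto.
  - intros x. unfold bB, bC, Q. auto_derive; [solveQ (x - 0) | field; solveQ (x - 0)].
  - apply cont_minus. apply cont_sinf, cont_bB; auto.
    apply (cont_mult (fun _ => / 2)). intros; apply continuous_const. apply cont_cosf, cont_bC; auto.
  - intros x.
    assert (H2 : Rabs x * Rabs (bC 0 y x) <= 1 / 2).
    { unfold bC. apply abs_frac. apply Q_pos; auto. apply Rabs_le. unfold Q.
      pose proof (pow2_ge_0 (x - 0 - y)). pose proof (pow2_ge_0 (x - 0 + y)). replace (x - 0) with x in * by ring. nra. }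
    rewrite Rabs_mult, (Rabs_left (- / 2)) by lra. rewrite Rabs_mult.
    pose proof (sin_dom (bC 0 y) (Rabs (bC 0 y x)) x (Rle_refl _)). rewrite Rabs_mult in H.
    pose proof (Rabs_pos x). pose proof (Rabs_pos (sin x)). pose proof (Rabs_pos (bC 0 y x)).
    assert (Rabs x * (Rabs (sin x) * Rabs (bC 0 y x)) <= Rabs x * Rabs (bC 0 y x)) by (apply Rmult_le_compat_l; auto).
    nra.
  - intros x. ring.
Qed.

Lemma bD_bnd c y x : 0 < y -> Rabs (bD c y x) <= Rabs c * / Q 0 y x + Rabs c * / Q c y x.
Proof.
  intros Hy. unfold bD.
  pose proof (Q_pos 0 y x Hy) as Q0. pose proof (Q_pos c y x Hy) as Qc.
  replace (x / Q 0 y x - (x - c) / Q c y x) with (c * (y ^ 2 - x * (x - c)) / (Q 0 y x * Q c y x))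
    by (unfold Q in *; field; lra).
  unfold Rdiv. rewrite Rabs_mult, Rabs_mult, (Rabs_right (/ (Q 0 y x * Q c y x))) by (left; apply Rinv_0_lt_compat; nra).
  assert (Rabs (y ^ 2 - x * (x - c)) <= Q 0 y x + Q c y x).
  { apply Rabs_le. unfold Q. pose proof (pow2_ge_0 (x - 0 + (x - c))). pose proof (pow2_ge_0 (x - 0 - (x - c))).
    pose proof (pow2_ge_0 y). replace (x - 0) with x in * by ring. nra. }
  replace (Rabs c * / Q 0 y x + Rabs c * / Q c y x) with (Rabs c * (Q 0 y x + Q c y x) * / (Q 0 y x * Q c y x))
    by (field; lra).
  apply Rmult_le_compat_r. left; apply Rinv_0_lt_compat; nra.
  apply Rmult_le_compat_l; auto using Rabs_pos.
Qed.

Lemma base_D (w : R -> R) c y : 0 < y -> (forall x, continuous w x) -> (forall x, Rabs (w x) <= 1) ->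
  (forall x, w (x - c) = w x) -> is_int_R (fun x => w x * bD c y x) 0.
Proof.
  intros Hy Cw Bw Pw.
  destruct (dom_Q2 (fun x => w x * bD c y x) (Rabs c) 0 c y Hy (cont_mult _ _ Cw (cont_bD c y Hy))) as [I HI].
  { intros x. rewrite Rabs_mult. apply Rle_trans with (1 * (Rabs c * / Q 0 y x + Rabs c * / Q c y x)).
    apply Rmult_le_compat; auto using Rabs_pos. apply bD_bnd; auto. lra. }
  enough (E : I = 0) by (rewrite E in HI; exact HI).
  set (g := fun x => x / Q 0 y x).
  apply (int_telescope w g c 1 I); auto.
  - unfold g. apply cont_of_derive. intros x. unfold Q. auto_derive. solveQ (x - 0).
  - intros x. unfold g. apply abs_frac. apply Q_pos; auto. rewrite Rmult_1_l.
    rewrite Rabs_right. unfold Q. pose proof (pow2_ge_0 y). replace (x - 0) with x by ring. nra.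
    apply Rle_ge. nra.
  - eapply int_ext; [|exact HI]. intros x. unfold bD, g, Q. replace (x - c - 0) with (x - c) by ring. reflexivity.
Qed.

Lemma shift_basis (w : R -> R) (bas : R -> R -> R -> R) (c y I : R) :
  (forall x, continuous w x) -> (forall x, continuous (bas 0 y) x) ->
  (forall x, w (x + - c) = w x) -> (forall x, bas c y x = bas 0 y (x + - c)) ->
  is_int_R (fun x => w x * bas 0 y x) I -> is_int_R (fun x => w x * bas c y x) I.
Proof.
  intros Cw Cb Pw Eb H.
  apply int_shift with (s := - c) in H. 2: apply cont_mult; auto.
  eapply int_ext; [|exact H]. intros x. simpl. rewrite Pw, Eb. auto.
Qed.

Lemma bA_sh c y x : bA c y x = bA 0 y (x + - c).
Proof. unfold bA, Q. replace (x + - c - 0) with (x - c) by ring. auto. Qed.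
Lemma bB_sh c y x : bB c y x = bB 0 y (x + - c).
Proof. unfold bB, Q. replace (x + - c - 0) with (x - c) by ring. auto. Qed.
Lemma bC_sh c y x : bC c y x = bC 0 y (x + - c).
Proof. unfold bC, Q. replace (x + - c - 0) with (x - c) by ring. auto. Qed.

Lemma combo (w : R -> R) y c vA vB vC vD k1 k2 k3 k4 k5 k6 k7 :
  is_int_R (fun x => w x * bA 0 y x) vA -> is_int_R (fun x => w x * bB 0 y x) vB ->
  is_int_R (fun x => w x * bC 0 y x) vC -> is_int_R (fun x => w x * bA c y x) vA ->
  is_int_R (fun x => w x * bB c y x) vB -> is_int_R (fun x => w x * bC c y x) vC ->
  is_int_R (fun x => w x * bD c y x) vD ->
  is_int_R (fun x => w x * (k1 * bA 0 y x + k2 * bB 0 y x + k3 * bC 0 y x + k4 * bA c y x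
                             + k5 * bB c y x + k6 * bC c y x + k7 * bD c y x))
     (k1 * vA + k2 * vB + k3 * vC + k4 * vA + k5 * vB + k6 * vC + k7 * vD).
Proof.
  intros H1 H2 H3 H4 H5 H6 H7.
  pose proof (int_plus _ _ _ _ (int_plus _ _ _ _ (int_plus _ _ _ _ (int_plus _ _ _ _
     (int_plus _ _ _ _ (int_plus _ _ _ _ (int_scal k1 _ _ H1) (int_scal k2 _ _ H2))
     (int_scal k3 _ _ H3)) (int_scal k4 _ _ H4)) (int_scal k5 _ _ H5)) (int_scal k6 _ _ H6))
     (int_scal k7 _ _ H7)) as H.
  eapply int_ext; [|exact H]. intros x. simpl. ring.
Qed.

Section Bases.
Variables (y : R) (n : Z).
Hypothesis Hy : 0 < y.
Let c := 2 * PI * IZR n.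

Lemma cos_pc x : cos (x + - c) = cos x.
Proof. unfold c. replace (x + - (2 * PI * IZR n)) with (x - 2 * PI * IZR n) by ring. apply cos_per. Qed.
Lemma sin_pc x : sin (x + - c) = sin x.
Proof. unfold c. replace (x + - (2 * PI * IZR n)) with (x - 2 * PI * IZR n) by ring. apply sin_per. Qed.

Lemma J_one k1 k2 k3 k4 k5 k6 k7 :
  is_int_R (fun x => k1 * bA 0 y x + k2 * bB 0 y x + k3 * bC 0 y x + k4 * bA c y x
                     + k5 * bB c y x + k6 * bC c y x + k7 * bD c y x)
     (k1 * 0 + k2 * 0 + k3 * PI + k4 * 0 + k5 * 0 + k6 * PI + k7 * 0).
Proof.
  eapply int_ext; [|apply (combo (fun _ => 1) y c)].
  - intros x. simpl. ring.
  - apply (int_ext (bA 0 y)); [intros; ring | apply int1_bA; auto].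
  - apply (int_ext (bB 0 y)); [intros; ring | apply int1_bB; auto].
  - apply (int_ext (bC 0 y)); [intros; ring | apply int1_bC; auto].
  - apply shift_basis; auto. apply cont_one. apply cont_bA; auto. apply bA_sh.
    apply (int_ext (bA 0 y)); [intros; ring | apply int1_bA; auto].
  - apply shift_basis; auto. apply cont_one. apply cont_bB; auto. apply bB_sh.
    apply (int_ext (bB 0 y)); [intros; ring | apply int1_bB; auto].
  - apply shift_basis; auto. apply cont_one. apply cont_bC; auto. apply bC_sh.
    apply (int_ext (bC 0 y)); [intros; ring | apply int1_bC; auto].
  - apply base_D; auto. apply cont_one. intros; rewrite Rabs_R1; lra.
Qed.

Lemma J_cos k1 k2 k3 k4 k5 k6 k7 :
  is_int_R (fun x => cos x * (k1 * bA 0 y x + k2 * bB 0 y x + k3 * bC 0 y x + k4 * bA c y x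
                     + k5 * bB c y x + k6 * bC c y x + k7 * bD c y x))
     (k1 * (- (PI * exp (- y))) + k2 * 0 + k3 * (PI * exp (- y)) + k4 * (- (PI * exp (- y)))
      + k5 * 0 + k6 * (PI * exp (- y)) + k7 * 0).
Proof.
  apply combo.
  - apply base_cosA; auto.
  - apply base_cosB; auto.
  - apply base_cosC; auto.
  - apply shift_basis; auto. apply cont_cos. apply cont_bA; auto. apply cos_pc. apply bA_sh. apply base_cosA; auto.
  - apply shift_basis; auto. apply cont_cos. apply cont_bB; auto. apply cos_pc. apply bB_sh. apply base_cosB; auto.
  - apply shift_basis; auto. apply cont_cos. apply cont_bC; auto. apply cos_pc. apply bC_sh. apply base_cosC; auto.
  - apply base_D; auto. apply cont_cos. intros; apply Rabs_le, COS_bound.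
    intros x. replace (x - c) with (x + - c) by ring. apply cos_pc.
Qed.

Lemma J_sin k1 k2 k3 k4 k5 k6 k7 :
  is_int_R (fun x => sin x * (k1 * bA 0 y x + k2 * bB 0 y x + k3 * bC 0 y x + k4 * bA c y x
                     + k5 * bB c y x + k6 * bC c y x + k7 * bD c y x))
     (k1 * 0 + k2 * (/ 2 * (PI * exp (- y))) + k3 * 0 + k4 * 0
      + k5 * (/ 2 * (PI * exp (- y))) + k6 * 0 + k7 * 0).
Proof.
  apply combo.
  - apply base_sinA; auto.
  - apply base_sinB; auto.
  - apply base_sinC; auto.
  - apply shift_basis; auto. apply cont_sin. apply cont_bA; auto. apply sin_pc. apply bA_sh. apply base_sinA; auto.
  - apply shift_basis; auto. apply cont_sin. apply cont_bB; auto. apply sin_pc. apply bB_sh. apply base_sinB; auto.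
  - apply shift_basis; auto. apply cont_sin. apply cont_bC; auto. apply sin_pc. apply bC_sh. apply base_sinC; auto.
  - apply base_D; auto. apply cont_sin. intros; apply Rabs_le, SIN_bound.
    intros x. replace (x - c) with (x + - c) by ring. apply sin_pc.
Qed.

End Bases.


Section Final.
Variables (y : R) (n : Z).
Hypothesis Hy : 0 < y.

Let E := exp y.
Lemma E_gt1 : 1 < E.
Proof. unfold E. pose proof (exp_ineq1 y ltac:(lra)). lra. Qed.
Lemma sinh_E : sinh y = (E - / E) / 2.
Proof. unfold sinh, E. rewrite exp_Ropp. auto. Qed.
Lemma cosh_E : cosh y = (E + / E) / 2.
Proof. unfold cosh, E. rewrite exp_Ropp. auto. Qed.
Lemma sinh_pos : 0 < sinh y.
Proof. rewrite sinh_E. pose proof E_gt1. assert (/ E < 1). { rewrite <- Rinv_1. apply Rinv_lt_contravar; lra. } lra. Qed.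
Lemma cosh_gt x : 0 < cosh y - cos x.
Proof.
  rewrite cosh_E. pose proof E_gt1. pose proof (COS_bound x).
  assert (E + / E > 2).
  { apply Rmult_gt_reg_l with E. lra. rewrite Rmult_plus_distr_l, Rinv_r by lra. nra. }
  lra.
Qed.

Lemma hinv_eq x : hinv x y = 2 * PI * (cosh y - cos x) / sinh y.
Proof.
  unfold hinv, h. pose proof sinh_pos. pose proof (cosh_gt x). pose proof PI_RGT_0.
  field. repeat split; lra.
Qed.

Lemma dx_hinv x : dx hinv x y = 2 * PI * sin x / sinh y.
Proof.
  unfold dx. rewrite (Derive_ext _ (fun t => 2 * PI * (cosh y - cos t) / sinh y)).
  2: { intros t. apply hinv_eq. }
  apply is_derive_unique. pose proof sinh_pos. auto_derive. lra. field. lra.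
Qed.

Lemma dy_hinv x : dy hinv x y = 2 * PI * (sinh y ^ 2 - (cosh y - cos x) * cosh y) / sinh y ^ 2.
Proof.
  unfold dy. apply is_derive_unique. unfold hinv, h.
  pose proof (cosh_gt x). pose proof sinh_pos. pose proof PI_RGT_0.
  assert (0 < / (2 * PI) * (sinh y * / (cosh y + - cos x))).
  { apply Rmult_lt_0_compat. apply Rinv_0_lt_compat; lra. apply Rmult_lt_0_compat. lra. apply Rinv_0_lt_compat; lra. }
  auto_derive.
  - repeat split; lra.
  - field. repeat split; lra.
Qed.

Definition cc k := 2 * PI * IZR k.

Lemma pk_eq k x : pk k x y = / PI * bC (cc k) y x.
Proof. unfold pk, bC, Q, cc. auto. Qed.

Lemma dx_pk k x : dx (pk k) x y = - (2 / PI) * bB (cc k) y x.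
Proof.
  unfold dx. apply is_derive_unique. unfold pk, bB, Q, cc. pose proof PI_RGT_0.
  auto_derive; [solveQ (x - 2 * PI * IZR k) | field; solveQ (x - 2 * PI * IZR k)].
Qed.

Lemma dy_pk k x : dy (pk k) x y = / PI * bA (cc k) y x.
Proof.
  unfold dy. apply is_derive_unique. unfold pk, bA, Q, cc. pose proof PI_RGT_0.
  auto_derive; [solveQ (x - 2 * PI * IZR k) | field; solveQ (x - 2 * PI * IZR k)].
Qed.
End Final.


Definition mm c y := c ^ 2 + 4 * y ^ 2.
Definition al c y := (c ^ 2 - 4 * y ^ 2) / mm c y ^ 2.
Definition be c y := - 4 * c * y / mm c y ^ 2.
Definition ga c y := (- c ^ 3 + 12 * c * y ^ 2) / mm c y ^ 3.
Definition de c y := (6 * c ^ 2 * y - 8 * y ^ 3) / mm c y ^ 3.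
Definition ee c y := - c / mm c y.
Definition ff c y := 2 * y / mm c y.

Lemma decK c y x : 0 < y ->
  2 / PI ^ 2 * (bA 0 y x * bB c y x - bB 0 y x * bA c y x) =
  / PI ^ 2 * (be c y * bA 0 y x + (- 2 * al c y) * bB 0 y x + 2 * ga c y * bC 0 y x
     + be c y * bA c y x + 2 * al c y * bB c y x + 2 * ga c y * bC c y x + (- 2 * de c y) * bD c y x).
Proof.
  intros Hy. pose proof PI_RGT_0. pose proof (Q_pos 0 y x Hy). pose proof (Q_pos c y x Hy).
  assert (0 < mm c y) by (unfold mm; pose proof (pow2_ge_0 c); pose proof (pow2_gt_0 y); lra).
  unfold al, be, ga, de, bA, bB, bC, bD. unfold mm in *. unfold Q in *.
  field. repeat split; lra.
Qed.

Lemma decP1 c y x : 0 < y -> c <> 0 ->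
  / PI ^ 2 * (bC c y x * bA 0 y x) =
  / (2 * PI ^ 2) * (ff c y * bA 0 y x + (- 2 * ee c y - 2 / c) * bB 0 y x + (al c y - 1 / c ^ 2) * bC 0 y x
     + 0 * bA c y x + 0 * bB c y x + (al c y + 1 / c ^ 2) * bC c y x + (- be c y) * bD c y x).
Proof.
  intros Hy Hc. pose proof PI_RGT_0. pose proof (Q_pos 0 y x Hy). pose proof (Q_pos c y x Hy).
  assert (0 < mm c y) by (unfold mm; pose proof (pow2_ge_0 c); pose proof (pow2_gt_0 y); lra).
  unfold al, be, ee, ff, bA, bB, bC, bD. unfold mm in *. unfold Q in *.
  field. repeat split; lra.
Qed.

Lemma decP2 c y x : 0 < y -> c <> 0 ->
  - (2 / PI ^ 2) * (bC c y x * bB 0 y x) =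
  / (2 * PI ^ 2) * (- (ee c y + 1 / c) * bA 0 y x + (- 2 * ff c y) * bB 0 y x + be c y * bC 0 y x
     + 0 * bA c y x + 0 * bB c y x + be c y * bC c y x + (al c y - 1 / c ^ 2) * bD c y x).
Proof.
  intros Hy Hc. pose proof PI_RGT_0. pose proof (Q_pos 0 y x Hy). pose proof (Q_pos c y x Hy).
  assert (0 < mm c y) by (unfold mm; pose proof (pow2_ge_0 c); pose proof (pow2_gt_0 y); lra).
  unfold al, be, ee, ff, bA, bB, bC, bD. unfold mm in *. unfold Q in *.
  field. repeat split; lra.
Qed.


Lemma cc0 : cc 0 = 0.
Proof. unfold cc. simpl. ring. Qed.

Section Main.
Variables (y : R) (n : Z).
Hypothesis Hy : 0 < y.
Hypothesis Hn : n <> 0%Z.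
Let c := cc n.
Let S := sinh y.
Let C := cosh y.
Let X := exp (- y).

Lemma c_ne : c <> 0.
Proof. unfold c, cc. pose proof PI_RGT_0. apply not_0_IZR in Hn. apply Rmult_integral_contrapositive_currified; auto. lra. Qed.

Definition comb (k1 k2 k3 k4 k5 k6 k7 : R) (x : R) :=
  k1 * bA 0 y x + k2 * bB 0 y x + k3 * bC 0 y x + k4 * bA c y x
  + k5 * bB c y x + k6 * bC c y x + k7 * bD c y x.

Definition KC x := / PI ^ 2 * comb (be c y) (- 2 * al c y) (2 * ga c y) (be c y) (2 * al c y) (2 * ga c y) (- 2 * de c y) x.
Definition P1C x := / (2 * PI ^ 2) * comb (ff c y) (- 2 * ee c y - 2 / c) (al c y - 1 / c ^ 2) 0 0 (al c y + 1 / c ^ 2) (- be c y) x.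
Definition P2C x := / (2 * PI ^ 2) * comb (- (ee c y + 1 / c)) (- 2 * ff c y) (be c y) 0 0 (be c y) (al c y - 1 / c ^ 2) x.

Lemma int_w_one k1 k2 k3 k4 k5 k6 k7 a :
  is_int_R (fun x => a * comb k1 k2 k3 k4 k5 k6 k7 x)
    (a * (k1 * 0 + k2 * 0 + k3 * PI + k4 * 0 + k5 * 0 + k6 * PI + k7 * 0)).
Proof. apply int_scal. apply (J_one y n Hy k1 k2 k3 k4 k5 k6 k7). Qed.

Lemma int_w_cos k1 k2 k3 k4 k5 k6 k7 a :
  is_int_R (fun x => cos x * (a * comb k1 k2 k3 k4 k5 k6 k7 x))
    (a * (k1 * (- (PI * X)) + k2 * 0 + k3 * (PI * X) + k4 * (- (PI * X))
      + k5 * 0 + k6 * (PI * X) + k7 * 0)).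
Proof.
  eapply int_ext; [|apply int_scal; apply (J_cos y n Hy k1 k2 k3 k4 k5 k6 k7)].
  intros x. unfold comb, c, cc. simpl. ring.
Qed.

Lemma int_w_sin k1 k2 k3 k4 k5 k6 k7 a :
  is_int_R (fun x => sin x * (a * comb k1 k2 k3 k4 k5 k6 k7 x))
    (a * (k1 * 0 + k2 * (/ 2 * (PI * X)) + k3 * 0 + k4 * 0
      + k5 * (/ 2 * (PI * X)) + k6 * 0 + k7 * 0)).
Proof.
  eapply int_ext; [|apply int_scal; apply (J_sin y n Hy k1 k2 k3 k4 k5 k6 k7)].
  intros x. unfold comb, c, cc. simpl. ring.
Qed.

End Main.


Theorem lemma3p10 (y : R) (n : Z) :
  0 < y -> n <> 0%Z ->
  exists I1 I2 : R,
    is_int_R (fun x => hinv x y * Hgrad_dot (pk 0) (pk n) x y) I1 /\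
    is_int_R (fun x => pk n x y * Hgrad_dot (pk 0) hinv x y) I2 /\
    I1 + 2 * I2 =
      PI * IZR n * (3 * y ^ 2 - PI ^ 2 * IZR n ^ 2) / (y ^ 2 + PI ^ 2 * IZR n ^ 2) ^ 3
      + y ^ 2 / (PI * IZR n * (y ^ 2 + PI ^ 2 * IZR n ^ 2) * sinh y ^ 2).
Proof.
  intros Hy Hn.
  pose proof (c_ne n Hn) as Hc. pose proof (sinh_pos y Hy) as HS. pose proof PI_RGT_0 as HPI.
  set (c := cc n) in *. set (S := sinh y) in *. set (C := cosh y).
  pose proof (int_w_one y n Hy (be c y) (-2 * al c y) (2 * ga c y) (be c y) (2 * al c y) (2 * ga c y) (-2 * de c y) (/ PI ^ 2)) as J1.
  pose proof (int_w_cos y n Hy (be c y) (-2 * al c y) (2 * ga c y) (be c y) (2 * al c y) (2 * ga c y) (-2 * de c y) (/ PI ^ 2)) as J2.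
  pose proof (int_w_sin y n Hy (ff c y) (- 2 * ee c y - 2 / c) (al c y - 1 / c ^ 2) 0 0 (al c y + 1 / c ^ 2) (- be c y) (/ (2 * PI ^ 2))) as J3.
  pose proof (int_w_cos y n Hy (- (ee c y + 1 / c)) (- 2 * ff c y) (be c y) 0 0 (be c y) (al c y - 1 / c ^ 2) (/ (2 * PI ^ 2))) as J4.
  pose proof (int_w_one y n Hy (- (ee c y + 1 / c)) (- 2 * ff c y) (be c y) 0 0 (be c y) (al c y - 1 / c ^ 2) (/ (2 * PI ^ 2))) as J5.
  eexists. eexists. split; [|split].
  - eapply int_ext; [| apply (int_minus _ _ _ _ (int_scal (2 * PI * C / S) _ _ J1) (int_scal (2 * PI / S) _ _ J2))].
    intros x. cbv beta.
    unfold Hgrad_dot. rewrite (hinv_eq y Hy), !(dx_pk y Hy), !(dy_pk y Hy), cc0.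
    unfold comb. fold c. rewrite <- (decK c y x Hy). fold S C. field. split; lra.
  - eapply int_ext; [| apply (int_plus _ _ _ _ (int_plus _ _ _ _ (int_scal (- (2 * PI / S)) _ _ J3)
        (int_scal (2 * PI * (S ^ 2 - C ^ 2) / S ^ 2) _ _ J5)) (int_scal (2 * PI * C / S ^ 2) _ _ J4))].
    intros x. cbv beta.
    unfold Hgrad_dot. rewrite (pk_eq y), (dx_hinv y Hy), (dy_hinv y Hy), !(dx_pk y Hy), !(dy_pk y Hy), cc0.
    unfold comb. fold c. rewrite <- (decP1 c y x Hy Hc), <- (decP2 c y x Hy Hc). fold S C. field. split; lra.
  - unfold al, be, ga, de, ee, ff, mm. unfold C, S, c, cc.
    rewrite (sinh_E y), (cosh_E y), exp_Ropp.
    pose proof (E_gt1 y Hy) as HE.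
    set (E := exp y) in *.
    pose proof (not_0_IZR n Hn) as HN. set (N := IZR n) in *.
    assert (HEi : E - / E <> 0).
    { assert (/ E < 1). { rewrite <- Rinv_1. apply Rinv_lt_contravar; lra. } lra. }
    assert (Hm : (2 * PI * N) ^ 2 + 4 * y ^ 2 <> 0).
    { pose proof (pow2_ge_0 (2 * PI * N)). pose proof (pow2_gt_0 y). lra. }
    assert (Hq : y ^ 2 + PI ^ 2 * N ^ 2 <> 0).
    { pose proof (pow2_ge_0 (PI * N)). pose proof (pow2_gt_0 y). replace (PI ^ 2 * N ^ 2) with ((PI * N) ^ 2) by ring. lra. }
    field. repeat split; auto; try lra.
    + apply Rgt_not_eq. nra.
Qed.
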